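(* The ordinary differential equation $$z''+\Big(2\frac{w'}{w}+\frac1r\Big)z'-2w^2z=0,\qquad r\in(0,\infty),$$ admits two linearly independent real solutions $z_{1,0},z_{2,0}$ such that $z_{1,0}(r)=O(1)$ as $r\to0^+$ and $z_{1,0}(r)=O(r^{-1/2}e^{\sqrt2 r})$ as $r\to\infty$, while $z_{2,0}(r)=O(r^{-2})$ as $r\to0^+$ and $z_{2,0}(r)=O(r^{-1/2}e^{-\sqrt2 r})$ as $r\to\infty$.
   Context: Let $w:[0,\infty)\to\mathbb{R}$ be the unique solution of $w''+\frac1r w'-\frac1{r^2}w+(1-w^2)w=0$ on $(0,\infty)$ with $w(0)=0$ and $w(r)\to1$ as $r\to\infty$; it satisfies $0<w<1$ and $w'>0$ on $(0,\infty)$, $w(r)=\alpha r+O(r^3)$ as $r\to0^+$ for some $\alpha>0$, and $w(r)=1-\frac{1}{2r^2}+O(r^{-4})$, $w'(r)=r^{-3}+O(r^{-5})$ as $r\to\infty$. *)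

(* Defs.v *)
From Stdlib Require Import Reals.
From Coquelicot Require Import Coquelicot.
Open Scope R_scope.

Definition twice_diff_pos (f : R -> R) : Prop :=
  forall r, 0 < r -> ex_derive f r /\ ex_derive (Derive f) r.

Definition bigO_at_0plus (f g : R -> R) : Prop :=
  exists C d, 0 < d /\ forall r, 0 < r < d -> Rabs (f r) <= C * Rabs (g r).

Definition bigO_at_infty (f g : R -> R) : Prop :=
  exists C M, forall r, M < r -> Rabs (f r) <= C * Rabs (g r).

Definition is_profile (w : R -> R) : Prop :=
  twice_diff_pos w /\
  (forall r, 0 < r ->
     Derive (Derive w) r + / r * Derive w r - / (r ^ 2) * w r
       + (1 - (w r) ^ 2) * w r = 0) /\
  w 0 = 0 /\
  is_lim w 0 0 /\
  is_lim w p_infty 1 /\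
  (forall r, 0 < r -> 0 < w r < 1) /\
  (forall r, 0 < r -> 0 < Derive w r) /\
  (exists alpha, 0 < alpha /\
     bigO_at_0plus (fun r => w r - alpha * r) (fun r => r ^ 3)) /\
  bigO_at_infty (fun r => w r - (1 - / (2 * r ^ 2))) (fun r => / (r ^ 4)) /\
  bigO_at_infty (fun r => Derive w r - / (r ^ 3)) (fun r => / (r ^ 5)).

Definition solves_z_ode (w z : R -> R) : Prop :=
  twice_diff_pos z /\
  forall r, 0 < r ->
    Derive (Derive z) r + (2 * Derive w r / w r + / r) * Derive z r
      - 2 * (w r) ^ 2 * z r = 0.

Definition lin_indep_pos (z1 z2 : R -> R) : Prop :=
  forall c1 c2 : R, (forall r, 0 < r -> c1 * z1 r + c2 * z2 r = 0) ->
    c1 = 0 /\ c2 = 0.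

(* Main.v *)
Require Import Defs.
From Stdlib Require Import Reals Lra Psatz Arith Factorial Classical Ranalysis5.
From Coquelicot Require Import Coquelicot.
Open Scope R_scope.

Lemma is_derive_cont (f : R -> R) x l : is_derive f x l -> continuity_pt f x.
Proof.
  intros H. apply derivable_continuous_pt. exists l. now apply is_derive_Reals.
Qed.

Lemma is_derive_continuous (f : R -> R) (x l : R) : is_derive f x l -> continuous f x.
Proof. intros H. apply continuity_pt_filterlim. now apply (is_derive_cont f x l). Qed.

Lemma incr_deriv (f df : R -> R) (a b : R) :
  a <= b -> (forall x, a <= x <= b -> is_derive f x (df x)) ->
  (forall x, a <= x <= b -> 0 <= df x) -> f a <= f b.
Proof.
  intros Hab Hd Hp.
  destruct (MVT_gen f a b df) as [c [Hc Heq]].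
  - intros x Hx. apply Hd. rewrite Rmin_left, Rmax_right in Hx by lra. lra.
  - intros x Hx. rewrite Rmin_left, Rmax_right in Hx by lra.
    apply (is_derive_cont f x (df x)). apply Hd. lra.
  - rewrite Rmin_left, Rmax_right in Hc by lra.
    assert (0 <= df c) by (apply Hp; lra). nra.
Qed.

Lemma strict_incr_deriv (f df : R -> R) (a b : R) :
  a < b -> (forall x, a <= x <= b -> is_derive f x (df x)) ->
  (forall x, a <= x <= b -> 0 < df x) -> f a < f b.
Proof.
  intros Hab Hd Hp.
  destruct (MVT_gen f a b df) as [c [Hc Heq]].
  - intros x Hx. apply Hd. rewrite Rmin_left, Rmax_right in Hx by lra. lra.
  - intros x Hx. rewrite Rmin_left, Rmax_right in Hx by lra.
    apply (is_derive_cont f x (df x)). apply Hd. lra.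
  - rewrite Rmin_left, Rmax_right in Hc by lra.
    assert (0 < df c) by (apply Hp; lra). nra.
Qed.

Lemma decr_deriv (f df : R -> R) (a b : R) :
  a <= b -> (forall x, a <= x <= b -> is_derive f x (df x)) ->
  (forall x, a <= x <= b -> df x <= 0) -> f b <= f a.
Proof.
  intros Hab Hd Hp.
  assert (- f a <= - f b); [|lra].
  apply (incr_deriv (fun x => - f x) (fun x => - df x) a b Hab).
  - intros x Hx. apply is_derive_Reals. apply derivable_pt_lim_opp. apply is_derive_Reals. now apply Hd.
  - intros x Hx. specialize (Hp x Hx). lra.
Qed.

Lemma exp_cube_bound (r : R) : 0 <= r -> r ^ 3 <= 27 * exp r.
Proof.
  intros Hr.
  assert (H1 : 1 + r/3 <= exp (r/3)) by (apply exp_ineq1_le).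
  assert (H2 : exp r = exp (r/3) * exp (r/3) * exp (r/3)).
  { rewrite <- !exp_plus. f_equal. lra. }
  rewrite H2.
  assert (0 <= r/3) by lra.
  assert (r/3 <= exp (r/3)) by lra.
  assert (0 <= exp (r/3)) by (left; apply exp_pos).
  set (e := exp (r/3)) in *. set (t := r/3) in *.
  assert (t*t <= e*e) by nra.
  assert (t*t*t <= e*e*e) by nra.
  replace (r^3) with (27 * (t*t*t)) by (unfold t; simpl; field). nra.
Qed.

Lemma sqrt2_bounds : 1.41 < sqrt 2 < 1.42.
Proof.
  assert (H := sqrt_sqrt 2 (ltac:(lra))).
  assert (H0 := sqrt_pos 2).
  split; nra.
Qed.

Lemma cmul (f g : R -> R) x : continuity_pt f x -> continuity_pt g x -> continuity_pt (fun y => f y * g y) x.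
Proof. intros. exact (continuity_pt_mult f g x H H0). Qed.
Lemma cplus (f g : R -> R) x : continuity_pt f x -> continuity_pt g x -> continuity_pt (fun y => f y + g y) x.
Proof. intros. exact (continuity_pt_plus f g x H H0). Qed.
Lemma cminus (f g : R -> R) x : continuity_pt f x -> continuity_pt g x -> continuity_pt (fun y => f y - g y) x.
Proof. intros. exact (continuity_pt_minus f g x H H0). Qed.
Lemma cdiv (f g : R -> R) x : continuity_pt f x -> continuity_pt g x -> g x <> 0 -> continuity_pt (fun y => f y / g y) x.
Proof. intros. exact (continuity_pt_div f g x H H0 H1). Qed.
Lemma cconst (c : R) x : continuity_pt (fun _ => c) x.
Proof. apply continuity_pt_const. intros a b. reflexivity. Qed.
Lemma cid x : continuity_pt (fun y => y) x.
Proof. apply continuity_pt_id. Qed.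
Lemma cpow (f : R -> R) n x : continuity_pt f x -> continuity_pt (fun y => f y ^ n) x.
Proof.
  intros H. induction n as [|n IH].
  - apply (continuity_pt_ext (fun _ => 1)); [reflexivity| apply cconst].
  - apply (continuity_pt_ext (fun y => f y * f y ^ n)); [reflexivity|apply cmul; auto].
Qed.
Lemma cont_of_pt (f : R -> R) x : continuity_pt f x -> continuous f x.
Proof. apply continuity_pt_filterlim. Qed.
Lemma pt_of_cont (f : R -> R) x : continuous f x -> continuity_pt f x.
Proof. apply continuity_pt_filterlim. Qed.

Lemma cRmax0 x : continuity_pt (fun r => Rmax 0 r) x.
Proof.
  apply (continuity_pt_ext (fun r => (r + Rabs r) / 2)).
  - intros r. unfold Rmax. destruct (Rle_dec 0 r).
    + rewrite Rabs_right by lra. field.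
    + rewrite Rabs_left by lra. field.
  - apply cdiv; [apply cplus; [apply cid|apply Rcontinuity_abs]|apply cconst|lra].
Qed.

Lemma pow_le_1 (x : R) (k : nat) : 0 <= x <= 1 -> x ^ k <= 1.
Proof.
  intros Hx. induction k; simpl; [lra|].
  assert (0 <= x ^ k) by (apply pow_le; lra). nra.
Qed.

Lemma RInt_pow (c : R) (k : nat) (t : R) :
  is_RInt (fun s => c * s ^ (S k)) 0 t (c * t ^ (S (S k)) / INR (S (S k))).
Proof.
  assert (HI : INR (S (S k)) <> 0) by (apply not_0_INR; lia).
  set (F := fun s => c / INR (S (S k)) * s ^ (S (S k))).
  replace (c * t ^ (S (S k)) / INR (S (S k))) with (minus (F t) (F 0)).
  2:{ unfold F. simpl. change (minus ?a ?b) with (a - b). field. auto. }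
  apply (is_RInt_derive (V:=R_CompleteNormedModule) F).
  - intros x _. unfold F. auto_derive; [auto|]. change (match k with 0%nat => 1 | S _ => INR k + 1 end + 1) with (INR (S (S k))). change (x * x ^ k) with (x ^ S k). field. auto.
  - intros x _. apply cont_of_pt. apply cmul; [apply cconst|apply cpow; apply cid].
Qed.

Lemma w_d1 w : is_profile w -> forall r, 0 < r -> ex_derive w r.
Proof. intros Hw r Hr. apply (proj1 Hw r Hr). Qed.
Lemma w_d2 w : is_profile w -> forall r, 0 < r -> ex_derive (Derive w) r.
Proof. intros Hw r Hr. apply (proj1 Hw r Hr). Qed.
Lemma w_ode w : is_profile w -> forall r, 0 < r ->
     Derive (Derive w) r + / r * Derive w r - / (r ^ 2) * w r
       + (1 - (w r) ^ 2) * w r = 0.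
Proof. intros Hw. apply (proj1 (proj2 Hw)). Qed.
Lemma w_0 w : is_profile w -> w 0 = 0.
Proof. intros Hw. apply Hw. Qed.
Lemma w_pos w : is_profile w -> forall r, 0 < r -> 0 < w r < 1.
Proof. intros Hw. apply Hw. Qed.
Lemma wd_pos w : is_profile w -> forall r, 0 < r -> 0 < Derive w r.
Proof. intros Hw. apply Hw. Qed.

Lemma w_cont w : is_profile w -> forall r, 0 <= r -> continuous w r.
Proof.
  intros Hw r Hr. destruct Hr as [Hr|Hr].
  - apply (is_derive_continuous w r (Derive w r)). apply Derive_correct. now apply w_d1.
  - subst r. apply continuity_pt_filterlim. apply continuity_pt_filterlim'.
    rewrite (w_0 w Hw). apply Hw.
Qed.

Lemma w_cont_pt w : is_profile w -> forall r, 0 <= r -> continuity_pt w r.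
Proof. intros Hw r Hr. apply continuity_pt_filterlim. now apply w_cont. Qed.

Lemma w_nonneg w : is_profile w -> forall r, 0 <= r -> 0 <= w r <= 1.
Proof.
  intros Hw r [Hr|Hr].
  - pose proof (w_pos w Hw r Hr). lra.
  - subst. rewrite (w_0 w Hw). lra.
Qed.

Lemma w_mono w : is_profile w -> forall s t, 0 <= s <= t -> w s <= w t.
Proof.
  intros Hw s t [[Hs|Hs] Hst].
  - apply (incr_deriv w (Derive w) s t Hst).
    + intros x Hx. apply Derive_correct. apply w_d1; auto; lra.
    + intros x Hx. left. apply wd_pos; auto; lra.
  - subst s. rewrite (w_0 w Hw). apply w_nonneg; auto; lra.
Qed.

Lemma w_lower0 w : is_profile w -> exists c, 0 < c /\ forall s, 0 < s <= 1 -> c * s <= w s.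
Proof.
  intros Hw.
  pose proof Hw as Hw0. destruct Hw0 as (_&_&_&_&_&_&_&[al [Hal [C [d [Hd HC]]]]]&_).
  set (s1 := Rmin (d/2) (Rmin 1 (al / (2 * (Rabs C + 1))))).
  assert (Hs1p : 0 < s1).
  { unfold s1. assert (0 < al / (2 * (Rabs C + 1))).
    { apply Rdiv_lt_0_compat; auto. pose proof (Rabs_pos C); lra. }
    repeat apply Rmin_glb_lt; lra. }
  assert (Hs1d : s1 <= d/2) by apply Rmin_l.
  assert (Hs11 : s1 <= 1) by (eapply Rle_trans; [apply Rmin_r|apply Rmin_l]).
  assert (Hs1a : s1 <= al / (2 * (Rabs C + 1))) by (eapply Rle_trans; [apply Rmin_r|apply Rmin_r]).
  assert (Hsmall : forall s, 0 < s <= s1 -> al * s / 2 <= w s).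
  { intros s Hs. assert (0 < s < d) by lra.
    specialize (HC s H). rewrite (Rabs_right (s^3)) in HC by (apply Rle_ge, pow_le; lra).
    assert (HCa : Rabs (w s - al * s) <= Rabs C * s ^ 3).
    { eapply Rle_trans; [apply HC|]. apply Rmult_le_compat_r. 
      - left. apply pow_lt; lra.
      - apply Rle_abs. }
    assert (Hab : - (Rabs C * s ^ 3) <= w s - al * s <= Rabs C * s ^ 3) by (apply Rabs_le_between; auto).
    assert (Hsa : s * (2 * (Rabs C + 1)) <= al).
    { apply Rle_trans with (s1 * (2 * (Rabs C + 1))).
      - apply Rmult_le_compat_r; [pose proof (Rabs_pos C); lra| lra].
      - unfold Rdiv in Hs1a. pose proof (Rabs_pos C).
        apply Rmult_le_compat_r with (r := 2 * (Rabs C + 1)) in Hs1a; [|lra].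
        rewrite Rmult_assoc, Rinv_l in Hs1a; lra. }
    assert (s ^ 2 <= s) by (simpl; nra).
    pose proof (Rabs_pos C).
    assert (Rabs C * s^3 <= al * s / 2).
    { replace (s^3) with (s * s^2) by ring.
      assert (Rabs C * s <= al/2) by nra.
      assert (s^2 <= s) by auto.
      nra. }
    destruct Hab. lra. }
  exists (al * s1 / 2). split.
  - apply Rmult_lt_0_compat; [nra|lra].
  - intros s Hs. destruct (Rle_lt_dec s s1) as [Hl|Hl].
    + assert (al * s / 2 <= w s) by (apply Hsmall; lra).
      assert (0 <= al * s * (1 - s1)) by (apply Rmult_le_pos; [apply Rmult_le_pos|]; lra). assert (al * s1 / 2 * s <= al * s / 2) by nra. lra.
    + assert (al * s1 / 2 <= w s1) by (apply Hsmall; lra).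
      assert (w s1 <= w s) by (apply (w_mono w Hw); lra).
      assert (0 <= al * s1 * (1 - s)) by (apply Rmult_le_pos; [apply Rmult_le_pos|]; lra). assert (al * s1 / 2 * s <= al * s1 / 2) by nra. lra.
Qed.

Lemma w_asym w : is_profile w -> exists M, 2 <= M /\ forall r, M < r -> 1 - / r ^ 2 <= w r.
Proof.
  intros Hw. pose proof Hw as Hw0.
  destruct Hw0 as (_&_&_&_&_&_&_&_&[C [M HC]]&_).
  exists (Rmax 2 (Rmax M (2 * Rabs C + 1))). split; [apply Rmax_l|].
  intros r Hr.
  assert (H2 : 2 < r) by (eapply Rle_lt_trans; [apply Rmax_l|apply Hr]).
  assert (HM : M < r) by (eapply Rle_lt_trans; [eapply Rle_trans; [apply Rmax_l|apply Rmax_r]|apply Hr]).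
  assert (HCr : 2 * Rabs C + 1 < r) by (eapply Rle_lt_trans; [eapply Rle_trans; [apply Rmax_r|apply Rmax_r]|apply Hr]).
  specialize (HC r HM).
  assert (Hr4 : 0 < r ^ 4) by (apply pow_lt; lra).
  rewrite (Rabs_right (/ r ^ 4)) in HC by (apply Rle_ge; left; apply Rinv_0_lt_compat; auto).
  assert (HCa : Rabs (w r - (1 - / (2 * r ^ 2))) <= Rabs C * / r ^ 4).
  { eapply Rle_trans; [apply HC|]. apply Rmult_le_compat_r; [left; apply Rinv_0_lt_compat; auto|apply Rle_abs]. }
  apply Rabs_le_between in HCa. destruct HCa as [HCa _].
  assert (Hr2 : 0 < r ^ 2) by (apply pow_lt; lra).
  assert (Rabs C * / r ^ 4 <= / (2 * r ^ 2)).
  { replace (r^4) with (r^2 * r^2) by ring.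
    rewrite Rinv_mult. 
    assert (Rabs C * / r^2 <= / 2).
    { apply Rmult_le_reg_r with (r^2); auto. rewrite Rmult_assoc, Rinv_l by lra.
      simpl. pose proof (Rabs_pos C). nra. }
    replace (/ (2 * r ^ 2)) with (/2 * / r^2) by (field; lra).
    rewrite <- Rmult_assoc. apply Rmult_le_compat_r; auto.
    left; apply Rinv_0_lt_compat; auto. }
  replace (/ r ^ 2) with (/ (2 * r^2) + / (2 * r^2)) by (field; lra).
  lra.
Qed.

Lemma w_large w : is_profile w -> exists M, 2 <= M /\ forall r, M < r -> 1/2 <= w r /\ 2 - 6 / r ^ 2 <= 3 * w r ^ 2 - 1.
Proof.
  intros Hw. destruct (w_asym w Hw) as [M [HM H]].
  exists M. split; auto. intros r Hr. specialize (H r Hr).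
  assert (Hr2 : 4 <= r ^ 2) by (simpl; nra).
  assert (0 < / r ^2 <= /4).
  { split; [apply Rinv_0_lt_compat; lra|]. apply Rinv_le_contravar; lra. }
  split; [lra|].
  assert (Hw2 : 1 - 2 * / r^2 <= w r ^ 2) by nra.
  unfold Rdiv. lra.
Qed.

Definition integ (w f : R -> R) (s : R) : R := 2 * s * w s ^ 4 * f s.
Definition Pop (w f : R -> R) (t : R) : R := RInt (integ w f) 0 t.
Definition Gop (w f : R -> R) (t : R) : R :=
  if Rle_dec t 0 then 0 else Pop w f t / (t * w t ^ 2).
Definition IG (w f : R -> R) (x : R) : R := RInt (Gop w f) 0 x.
Definition Top (w f : R -> R) (r : R) : R := IG w f (Rmax 0 r).

Lemma integ_cont w f : is_profile w -> (forall x, continuity_pt f x) ->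
  forall s, 0 <= s -> continuity_pt (integ w f) s.
Proof.
  intros Hw Hf s Hs. unfold integ.
  apply cmul; auto. apply cmul; [apply cmul; [apply cconst|apply cid]|].
  apply cpow. now apply w_cont_pt.
Qed.

Lemma integ_ex w f : is_profile w -> (forall x, continuity_pt f x) ->
  forall t, 0 <= t -> ex_RInt (integ w f) 0 t.
Proof.
  intros Hw Hf t Ht. apply (ex_RInt_continuous (V:=R_CompleteNormedModule)).
  intros z Hz. rewrite Rmin_left, Rmax_right in Hz by lra.
  apply cont_of_pt. apply integ_cont; auto; lra.
Qed.

Lemma Pop_deriv w f : is_profile w -> (forall x, continuity_pt f x) ->
  forall t, 0 < t -> is_derive (Pop w f) t (integ w f t).
Proof.
  intros Hw Hf t Ht. unfold Pop.
  apply (is_derive_RInt (V:=R_CompleteNormedModule) _ _ 0).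
  - apply (locally_interval _ t 0 p_infty); simpl; auto.
    intros y Hy _. apply (RInt_correct (V:=R_CompleteNormedModule)).
    apply integ_ex; auto; lra.
  - apply cont_of_pt. apply integ_cont; auto; lra.
Qed.

Lemma Pop_bound w f C k : is_profile w -> (forall x, continuity_pt f x) ->
  (forall s, 0 <= s -> 0 <= f s <= C * s ^ k) ->
  forall t, 0 <= t -> 0 <= Pop w f t <= 2 * C * w t ^ 4 * t ^ (S (S k)) / INR (S (S k)).
Proof.
  intros Hw Hf Hb t Ht. unfold Pop.
  assert (Hex := integ_ex w f Hw Hf t Ht).
  pose proof (w_nonneg w Hw t Ht) as Hwt.
  split.
  - apply Rle_trans with (RInt (fun _ => 0) 0 t).
    { rewrite RInt_const. change (scal (t - 0) 0) with ((t - 0) * 0). lra. }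
    apply RInt_le; auto. apply ex_RInt_const.
    intros x Hx. unfold integ. pose proof (w_nonneg w Hw x (ltac:(lra))).
    pose proof (Hb x (ltac:(lra))).
    assert (0 <= w x ^ 4) by (apply pow_le; lra).
    apply Rmult_le_pos; [|lra]. apply Rmult_le_pos; [lra|auto].
  - replace (2 * C * w t ^ 4 * t ^ S (S k) / INR (S (S k))) with
      (RInt (fun s => (2 * C * w t ^ 4) * s ^ (S k)) 0 t).
    2:{ apply is_RInt_unique. apply RInt_pow. }
    apply RInt_le; auto.
    + eexists. apply RInt_pow.
    + intros x Hx. unfold integ. pose proof (w_nonneg w Hw x (ltac:(lra))).
      pose proof (Hb x (ltac:(lra))).
      assert (w x ^ 4 <= w t ^ 4).
      { apply pow_incr. split; [lra|]. apply (w_mono w Hw); lra. }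
      assert (0 <= w x ^ 4) by (apply pow_le; lra).
      assert (0 <= x ^ k) by (apply pow_le; lra).
      change (x ^ S k) with (x * x ^ k).
      assert (f x * w x ^ 4 <= C * x ^ k * w t ^ 4).
      { apply Rmult_le_compat; lra. }
      assert (2 * x * (f x * w x ^ 4) <= 2 * x * (C * x ^ k * w t ^ 4)).
      { apply Rmult_le_compat_l; lra. }
      nra.
Qed.

Lemma Gop_pos_eq w f t : 0 < t -> Gop w f t = Pop w f t / (t * w t ^ 2).
Proof. intros Ht. unfold Gop. destruct (Rle_dec t 0); [lra|auto]. Qed.

Lemma Gop_bound w f C k : is_profile w -> (forall x, continuity_pt f x) ->
  (forall s, 0 <= s -> 0 <= f s <= C * s ^ k) ->
  forall t, 0 < t -> 0 <= Gop w f t <= 2 * C * t ^ (S k) / INR (S (S k)).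
Proof.
  intros Hw Hf Hb t Ht. rewrite Gop_pos_eq by auto.
  pose proof (Pop_bound w f C k Hw Hf Hb t (ltac:(lra))) as HP.
  pose proof (w_pos w Hw t Ht) as Hwt.
  assert (HI : 0 < INR (S (S k))) by (apply lt_0_INR; lia).
  assert (Hd : 0 < t * w t ^ 2) by (apply Rmult_lt_0_compat; [lra|apply pow_lt; lra]).
  split.
  - apply Rmult_le_pos; [lra|left; apply Rinv_0_lt_compat; auto].
  - apply Rmult_le_reg_r with (t * w t ^ 2); auto.
    unfold Rdiv at 1. rewrite Rmult_assoc, Rinv_l, Rmult_1_r by lra.
    eapply Rle_trans; [apply HP|].
    assert (0 <= C).
    { destruct (Hb 1 ltac:(lra)) as [h1 h2]. rewrite pow1 in h2. lra. }
    assert (0 <= t ^ S k) by (apply pow_le; lra).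
    assert (w t ^ 2 <= 1) by (apply pow_le_1; lra).
    change (t ^ S (S k)) with (t * t ^ S k).
    replace (w t ^ 4) with (w t ^ 2 * w t ^ 2) by ring.
    unfold Rdiv. 
    assert (0 <= 2 * C * t ^ S k * / INR (S (S k))).
    { apply Rmult_le_pos; [apply Rmult_le_pos; lra|left; apply Rinv_0_lt_compat; auto]. }
    assert (0 <= w t ^ 2) by (apply pow_le; lra).
    replace (2 * C * (w t ^ 2 * w t ^ 2) * (t * t ^ S k) * / INR (S (S k)))
      with ((2 * C * t ^ S k * / INR (S (S k))) * (t * w t ^ 2) * w t ^ 2) by ring.
    assert (0 <= (2 * C * t ^ S k * / INR (S (S k))) * (t * w t ^ 2)) by (apply Rmult_le_pos; lra).
    nra.
Qed.

Lemma Gop_cont w f C k : is_profile w -> (forall x, continuity_pt f x) ->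
  (forall s, 0 <= s -> 0 <= f s <= C * s ^ k) ->
  forall t, continuity_pt (Gop w f) t.
Proof.
  intros Hw Hf Hb t.
  assert (HC : 0 <= C).
  { destruct (Hb 1 ltac:(lra)) as [h1 h2]. rewrite pow1 in h2. lra. }
  destruct (Rtotal_order t 0) as [Hneg|[H0|Hpos]].
  - apply (continuity_pt_locally_ext (fun _ => 0) _ (- t)); [lra| |apply cconst].
    intros y Hy. unfold Rdist in Hy. unfold Gop. destruct (Rle_dec y 0); auto.
    apply Rabs_def2 in Hy. lra.
  - subst t. intros eps Heps.
    exists (Rmin 1 (eps / (C + 1))). split.
    { apply Rmin_glb_lt; [lra|apply Rdiv_lt_0_compat; lra]. }
    intros x [_ Hx]. change (Base R_met) with R in x. simpl in Hx. unfold Rdist in Hx |- *. simpl. unfold Rdist.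
    unfold Gop at 2. destruct (Rle_dec 0 0) as [_|n]; [|lra].
    rewrite Rminus_0_r in *.
    unfold Gop. destruct (Rle_dec x 0) as [Hx0|Hx0].
    + rewrite ?Rminus_0_r, Rabs_R0. auto.
    + rewrite ?Rminus_0_r. apply Rnot_le_lt in Hx0.
      rewrite Rabs_right in Hx by lra.
      assert (Hx1 : x < 1) by (eapply Rlt_le_trans; [apply Hx|apply Rmin_l]).
      assert (Hxe : x < eps / (C + 1)) by (eapply Rlt_le_trans; [apply Hx|apply Rmin_r]).
      pose proof (Gop_bound w f C k Hw Hf Hb x Hx0) as HG.
      rewrite Gop_pos_eq in HG by auto.
      rewrite Rabs_right by lra.
      assert (HI : 2 <= INR (S (S k))).
      { replace 2 with (INR 2) by (simpl; ring). apply le_INR. lia. }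
      assert (x ^ S k <= x).
      { change (x ^ S k) with (x * x ^ k). assert (x ^ k <= 1) by (apply pow_le_1; lra).
        assert (0 <= x ^ k) by (apply pow_le; lra). nra. }
      assert (2 * C * x ^ S k / INR (S (S k)) <= C * x).
      { apply Rmult_le_reg_r with (INR (S (S k))); [lra|].
        unfold Rdiv. rewrite Rmult_assoc, Rinv_l, Rmult_1_r by lra.
        assert (0 <= x ^ S k) by (apply pow_le; lra). assert (C * x ^ S k <= C * x) by (apply Rmult_le_compat_l; lra). assert (C * x * 2 <= C * x * INR (S (S k))) by (apply Rmult_le_compat_l; [apply Rmult_le_pos|]; lra). lra. }
      assert (C * x < eps).
      { apply Rle_lt_trans with ((C+1) * x); [nra|].
        apply Rmult_lt_reg_r with (/ (C+1)); [apply Rinv_0_lt_compat; lra|].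
        replace ((C + 1) * x * / (C + 1)) with x by (field; lra). apply Hxe. }
      lra.
  - apply (continuity_pt_locally_ext (fun y => Pop w f y / (y * w y ^ 2)) _ t); [lra| |].
    + intros y Hy. unfold Rdist in Hy. apply Rabs_def2 in Hy.
      rewrite Gop_pos_eq; auto; lra.
    + apply cdiv.
      * apply (is_derive_cont _ _ (integ w f t)). apply Pop_deriv; auto.
      * apply cmul; [apply cid|apply cpow; apply w_cont_pt; auto; lra].
      * pose proof (w_pos w Hw t Hpos). assert (0 < w t ^ 2) by (apply pow_lt; lra). nra.
Qed.

Lemma Gop_ex w f C k : is_profile w -> (forall x, continuity_pt f x) ->
  (forall s, 0 <= s -> 0 <= f s <= C * s ^ k) ->
  forall a b, ex_RInt (Gop w f) a b.
Proof.
  intros Hw Hf Hb a b. apply (ex_RInt_continuous (V:=R_CompleteNormedModule)).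
  intros z _. apply cont_of_pt. eapply Gop_cont; eauto.
Qed.

Lemma IG_deriv w f C k : is_profile w -> (forall x, continuity_pt f x) ->
  (forall s, 0 <= s -> 0 <= f s <= C * s ^ k) ->
  forall x, is_derive (IG w f) x (Gop w f x).
Proof.
  intros Hw Hf Hb x. unfold IG.
  apply (is_derive_RInt (V:=R_CompleteNormedModule) _ _ 0).
  - apply (locally_interval _ x m_infty p_infty); simpl; auto.
    intros y _ _. apply (RInt_correct (V:=R_CompleteNormedModule)).
    eapply Gop_ex; eauto.
  - apply cont_of_pt. eapply Gop_cont; eauto.
Qed.

Lemma Top_cont w f C k : is_profile w -> (forall x, continuity_pt f x) ->
  (forall s, 0 <= s -> 0 <= f s <= C * s ^ k) ->
  forall x, continuity_pt (Top w f) x.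
Proof.
  intros Hw Hf Hb x. unfold Top.
  apply (continuity_pt_comp (fun r => Rmax 0 r) (IG w f)).
  - apply cRmax0.
  - eapply is_derive_cont. eapply IG_deriv; eauto.
Qed.

Lemma Top_neg w f r : r <= 0 -> Top w f r = 0.
Proof.
  intros Hr. unfold Top, IG. rewrite Rmax_left by lra.
  apply (RInt_point (V:=R_CompleteNormedModule)).
Qed.

Lemma Top_deriv w f C k : is_profile w -> (forall x, continuity_pt f x) ->
  (forall s, 0 <= s -> 0 <= f s <= C * s ^ k) ->
  forall x, 0 < x -> is_derive (Top w f) x (Gop w f x).
Proof.
  intros Hw Hf Hb x Hx.
  apply (is_derive_ext_loc (IG w f)).
  - apply (locally_interval _ x 0 p_infty); simpl; auto.
    intros y Hy _. unfold Top. rewrite Rmax_right; auto; lra.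
  - eapply IG_deriv; eauto.
Qed.

Lemma Top_bound w f C k : is_profile w -> (forall x, continuity_pt f x) ->
  (forall s, 0 <= s -> 0 <= f s <= C * s ^ k) ->
  forall r, 0 <= r -> 0 <= Top w f r <= 2 * C * r ^ (S (S k)) / (INR (S (S k)) * INR (S (S k))).
Proof.
  intros Hw Hf Hb r Hr. unfold Top, IG. rewrite Rmax_right by auto.
  assert (HI : 0 < INR (S (S k))) by (apply lt_0_INR; lia).
  split.
  - apply Rle_trans with (RInt (fun _ => 0) 0 r).
    { rewrite RInt_const. change (scal (r - 0) 0) with ((r - 0) * 0). lra. }
    apply RInt_le; auto. apply ex_RInt_const. eapply Gop_ex; eauto.
    intros x Hx. eapply Gop_bound; eauto; lra.
  - replace (2 * C * r ^ S (S k) / (INR (S (S k)) * INR (S (S k)))) with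
      (RInt (fun s => (2 * C / INR (S (S k))) * s ^ (S k)) 0 r).
    2:{ rewrite (is_RInt_unique _ _ _ _ (RInt_pow _ _ _)). set (N := INR (S (S k))) in *. match goal with |- ?a = ?b => change (@eq R a b) end. field. lra. }
    apply RInt_le; auto.
    + eapply Gop_ex; eauto.
    + eexists. apply RInt_pow.
    + intros x Hx. destruct (Gop_bound w f C k Hw Hf Hb x ltac:(lra)) as [_ H].
      unfold Rdiv in *. lra.
Qed.

Fixpoint dn (w : R -> R) (n : nat) : R -> R :=
  match n with O => fun _ => 1 | S m => Top w (dn w m) end.

Lemma dn_prop w : is_profile w -> forall n,
  (forall x, continuity_pt (dn w n) x) /\
  (forall s, 0 <= s -> 0 <= dn w n s <= / INR (fact n) * s ^ (2 * n)).
Proof.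
  intros Hw n. induction n as [|n [IHc IHb]].
  - split.
    + intros x. apply cconst.
    + intros s _. simpl. lra.
  - split.
    + intros x. simpl. eapply Top_cont; eauto.
    + intros s Hs. simpl dn.
      destruct (Top_bound w (dn w n) _ _ Hw IHc IHb s Hs) as [H1 H2].
      split; auto. eapply Rle_trans; [apply H2|].
      replace (2 * S n)%nat with (S (S (2 * n))) by lia.
      rewrite fact_simpl, mult_INR.
      assert (Hf : 0 < INR (fact n)) by (apply lt_0_INR, lt_O_fact).
      assert (Hs2 : 0 <= s ^ S (S (2 * n))) by (apply pow_le; lra).
      set (N := INR (S (S (2 * n)))).
      assert (HN : N = 2 * INR n + 2) by (unfold N; rewrite !S_INR, mult_INR; simpl; ring).
      assert (Hn : 0 <= INR n) by apply pos_INR.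
      rewrite S_INR.
      set (P := s ^ S (S (2 * n))) in *.
      rewrite HN.
      assert (/ INR (fact n) * 2 / ((2 * INR n + 2) * (2 * INR n + 2)) <= / ((INR n + 1) * INR (fact n))).
      { rewrite Rinv_mult.
        apply Rmult_le_reg_r with (INR (fact n) * ((2 * INR n + 2) * (2 * INR n + 2)) * (INR n + 1)).
        { apply Rmult_lt_0_compat; [apply Rmult_lt_0_compat|]; nra. }
        field_simplify; try nra. }
      unfold Rdiv in *. 
      replace (2 * / INR (fact n) * P * / ((2 * INR n + 2) * (2 * INR n + 2)))
        with ((/ INR (fact n) * 2 * / ((2 * INR n + 2) * (2 * INR n + 2))) * P) by ring.
      apply Rmult_le_compat_r; [unfold P; apply pow_le; lra|exact H].
Qed.

Lemma exp_series x : is_series (fun n => / INR (fact n) * x ^ n) (exp x).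
Proof.
  pose proof (is_exp_Reals x) as H. unfold is_pseries in H.
  eapply is_series_ext; [|apply H]. intros n. simpl.
  change (scal (pow_n x n) (/ INR (fact n))) with (pow_n x n * / INR (fact n)).
  change (pow_n x n) with (x ^ n). ring.
Qed.

Lemma series_Un_cv (a : nat -> R) l : is_series a l -> Un_cv (sum_f_R0 a) l.
Proof. intros H. apply is_series_Reals in H. exact H. Qed.

Lemma cvu_series (u : nat -> R -> R) (a : nat -> R) (la : R) c (r : posreal) :
  is_series a la -> (forall n y, Boule c r y -> Rabs (u n y) <= a n) ->
  CVU (fun N y => sum_f_R0 (fun n => u n y) N) (fun y => Series (fun n => u n y)) c r.
Proof.
  intros Ha Hb eps Heps.
  pose proof (series_Un_cv a la Ha) as Hcv.
  destruct (Hcv eps Heps) as [N HN].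
  exists N. intros n y Hn Hy.
  assert (Hex : ex_series (fun k => u k y)).
  { apply (ex_series_le (V:=R_CompleteNormedModule) _ a).
    - intros k. apply (Hb k y Hy).
    - eexists; eauto. }
  assert (Hcu : Un_cv (fun m => SP u m y) (Series (fun k => u k y))).
  { apply series_Un_cv. apply Series_correct. auto. }
  eapply Rle_lt_trans.
  { apply (sum_maj1 u a y _ la n Hcu Hcv). intros k. apply Hb; auto. }
  specialize (HN n Hn). unfold Rdist in HN. apply Rabs_def2 in HN. lra.
Qed.

Lemma cvu_pointwise fn f c (r : posreal) : CVU fn f c r ->
  forall y, Boule c r y -> Un_cv (fun n => fn n y) (f y).
Proof.
  intros H y Hy eps Heps. destruct (H eps Heps) as [N HN].
  exists N. intros n Hn. unfold Rdist. rewrite <- Rabs_Ropp, Ropp_minus_distr.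
  apply HN; auto.
Qed.

Lemma cvu_scale fn f (h : R -> R) K c (r : posreal) : CVU fn f c r ->
  (forall y, Boule c r y -> Rabs (h y) <= K) ->
  CVU (fun n y => h y * fn n y) (fun y => h y * f y) c r.
Proof.
  intros H Hh eps Heps.
  destruct (H (eps / (Rabs K + 1))) as [N HN].
  { apply Rdiv_lt_0_compat; auto. pose proof (Rabs_pos K). lra. }
  exists N. intros n y Hn Hy.
  rewrite <- Rmult_minus_distr_l, Rabs_mult.
  specialize (HN n y Hn Hy). specialize (Hh y Hy).
  pose proof (Rabs_pos K). pose proof (Rabs_pos (h y)).
  pose proof (Rabs_pos (f y - fn n y)).
  apply Rle_lt_trans with ((Rabs K + 1) * Rabs (f y - fn n y)).
  - apply Rmult_le_compat_r; auto. pose proof (Rle_abs K). lra.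
  - apply Rmult_lt_reg_r with (/ (Rabs K + 1)). apply Rinv_0_lt_compat; lra.
    replace ((Rabs K + 1) * Rabs (f y - fn n y) * / (Rabs K + 1)) with (Rabs (f y - fn n y)) by (field; lra).
    apply HN.
Qed.

Definition zf (w : R -> R) (x : R) : R := Series (fun n => dn w n x).
Definition pf (w : R -> R) (x : R) : R := Series (fun n => Pop w (dn w n) x).

Lemma dn_cont w : is_profile w -> forall n x, continuity_pt (dn w n) x.
Proof. intros Hw n. apply (proj1 (dn_prop w Hw n)). Qed.
Lemma dn_bnd w : is_profile w -> forall n s, 0 <= s -> 0 <= dn w n s <= / INR (fact n) * s ^ (2 * n).
Proof. intros Hw n. apply (proj2 (dn_prop w Hw n)). Qed.

Lemma Pop_dn_bnd w : is_profile w -> forall n t, 0 <= t ->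
  0 <= Pop w (dn w n) t <= / INR (fact n) * t ^ (S (S (2 * n))).
Proof.
  intros Hw n t Ht.
  destruct (Pop_bound w (dn w n) _ _ Hw (dn_cont w Hw n) (dn_bnd w Hw n) t Ht) as [H1 H2].
  split; auto. eapply Rle_trans; [apply H2|].
  pose proof (w_nonneg w Hw t Ht).
  assert (w t ^ 4 <= 1) by (apply pow_le_1; lra).
  assert (0 <= w t ^ 4) by (apply pow_le; lra).
  assert (HI : 2 <= INR (S (S (2 * n)))).
  { replace 2 with (INR 2) by (simpl; ring). apply le_INR. lia. }
  assert (Hf : 0 < / INR (fact n)) by (apply Rinv_0_lt_compat, lt_0_INR, lt_O_fact).
  assert (0 <= t ^ S (S (2 * n))) by (apply pow_le; lra).
  set (P := t ^ S (S (2 * n))) in *. set (N := INR (S (S (2 * n)))) in *.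
  set (F := / INR (fact n)) in *.
  apply Rmult_le_reg_r with N; [lra|]. unfold Rdiv.
  rewrite Rmult_assoc, Rinv_l, Rmult_1_r by lra.
  assert (F * w t ^ 4 * P <= F * P).
  { rewrite Rmult_assoc. apply Rmult_le_compat_l; [lra|].
    replace P with (1 * P) at 2 by ring. apply Rmult_le_compat_r; lra. }
  assert (0 <= F * P) by (apply Rmult_le_pos; lra).
  nra.
Qed.

Lemma sum_derive (u : nat -> R -> R) (du : nat -> R) y N :
  (forall n, is_derive (u n) y (du n)) ->
  is_derive (fun x => sum_f_R0 (fun n => u n x) N) y (sum_f_R0 du N).
Proof.
  intros H. induction N as [|N IH].
  - simpl. apply H.
  - simpl. apply is_derive_Reals. apply is_derive_Reals in IH.
    exact (derivable_pt_lim_plus _ _ y _ _ IH (proj1 (is_derive_Reals _ _ _) (H (S N)))).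
Qed.

Lemma sum_cont (u : nat -> R -> R) y N :
  (forall n, continuity_pt (u n) y) ->
  continuity_pt (fun x => sum_f_R0 (fun n => u n x) N) y.
Proof.
  intros H. induction N as [|N IH].
  - simpl. apply H.
  - simpl. apply cplus; auto.
Qed.

Lemma sum_mult_l (h : R) (a : nat -> R) N : sum_f_R0 (fun n => h * a n) N = h * sum_f_R0 a N.
Proof. induction N as [|N IH]. - simpl. ring. - cbn [sum_f_R0]. rewrite IH. ring. Qed.

Lemma dn_ball_bnd w : is_profile w -> forall x0 : R, 0 < x0 ->
  forall (r : posreal), r <= x0 / 2 -> forall n y, Boule x0 r y ->
  Rabs (dn w n y) <= / INR (fact n) * ((2 * x0) ^ 2) ^ n.
Proof.
  intros Hw x0 Hx0 r Hr n y Hy. unfold Boule in Hy. apply Rabs_def2 in Hy.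
  destruct (dn_bnd w Hw n y ltac:(lra)) as [H1 H2].
  rewrite Rabs_right by lra. eapply Rle_trans; [apply H2|].
  rewrite <- pow_mult. apply Rmult_le_compat_l.
  - left. apply Rinv_0_lt_compat, lt_0_INR, lt_O_fact.
  - apply pow_incr. lra.
Qed.

Lemma Pop_ball_bnd w : is_profile w -> forall x0 : R, 0 < x0 ->
  forall (r : posreal), r <= x0 / 2 -> forall n y, Boule x0 r y ->
  Rabs (Pop w (dn w n) y) <= (2 * x0) ^ 2 * (/ INR (fact n) * ((2 * x0) ^ 2) ^ n).
Proof.
  intros Hw x0 Hx0 r Hr n y Hy. unfold Boule in Hy. apply Rabs_def2 in Hy.
  destruct (Pop_dn_bnd w Hw n y ltac:(lra)) as [H1 H2].
  rewrite Rabs_right by lra. eapply Rle_trans; [apply H2|].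
  rewrite <- pow_mult.
  replace (S (S (2 * n))) with (2 + 2 * n)%nat by lia. rewrite pow_add.
  assert (Hf : 0 < / INR (fact n)) by (apply Rinv_0_lt_compat, lt_0_INR, lt_O_fact).
  assert (y ^ 2 <= (2 * x0) ^ 2) by (apply pow_incr; lra).
  assert (y ^ (2 * n) <= (2 * x0) ^ (2 * n)) by (apply pow_incr; lra).
  assert (0 <= y ^ 2) by (apply pow_le; lra).
  assert (0 <= y ^ (2 * n)) by (apply pow_le; lra).
  assert (y ^ 2 * y ^ (2 * n) <= (2 * x0) ^ 2 * (2 * x0) ^ (2 * n)) by (apply Rmult_le_compat; lra).
  nra.
Qed.

Lemma cvu_shift fn f c r : CVU fn f c r -> CVU (fun N => fn (S N)) f c r.
Proof.
  intros H eps Heps. destruct (H eps Heps) as [N HN]. exists N.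
  intros n y Hn Hy. apply HN; auto; lia.
Qed.

Lemma ball_pos x0 (r : posreal) y : 0 < x0 -> r <= x0 / 2 -> Boule x0 r y -> x0 / 2 <= y <= 3 * x0 / 2.
Proof. intros H Hr Hy. unfold Boule in Hy. apply Rabs_def2 in Hy. lra. Qed.

Lemma zf_cont_ball w : is_profile w -> forall x0, 0 < x0 -> forall (r : posreal), r <= x0 / 2 ->
  forall y, Boule x0 r y -> continuity_pt (zf w) y.
Proof.
  intros Hw x0 Hx0 r Hr y Hy.
  apply (CVU_continuity (fun N x => sum_f_R0 (fun n => dn w n x) N) (zf w) x0 r).
  - apply (cvu_series _ (fun n => / INR (fact n) * ((2 * x0) ^ 2) ^ n) (exp ((2 * x0) ^ 2))). apply exp_series.
    intros n y' Hy'. apply (dn_ball_bnd w Hw x0 Hx0 r Hr n y' Hy').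
  - intros n y' _. apply sum_cont. intros m. apply dn_cont; auto.
  - auto.
Qed.

Lemma pf_cont_ball w : is_profile w -> forall x0, 0 < x0 -> forall (r : posreal), r <= x0 / 2 ->
  forall y, Boule x0 r y -> continuity_pt (pf w) y.
Proof.
  intros Hw x0 Hx0 r Hr y Hy.
  apply (CVU_continuity (fun N x => sum_f_R0 (fun n => Pop w (dn w n) x) N) (pf w) x0 r).
  - apply (cvu_series _ (fun n => (2 * x0) ^ 2 * (/ INR (fact n) * ((2 * x0) ^ 2) ^ n)) ((2 * x0) ^ 2 * exp ((2 * x0) ^ 2))).
    + apply (is_series_scal_l (K:=R_AbsRing) (V:=R_NormedModule)). apply exp_series.
    + intros n y' Hy'. apply (Pop_ball_bnd w Hw x0 Hx0 r Hr n y' Hy').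
  - intros n y' Hy'. apply sum_cont. intros m.
    pose proof (ball_pos x0 r y' Hx0 Hr Hy').
    eapply is_derive_cont. apply Pop_deriv; auto. apply dn_cont; auto. lra.
  - auto.
Qed.

Lemma pf_deriv w : is_profile w -> forall x0, 0 < x0 ->
  derivable_pt_lim (pf w) x0 (2 * x0 * w x0 ^ 4 * zf w x0).
Proof.
  intros Hw x0 Hx0.
  assert (Hrp : 0 < x0 / 2) by lra. set (r := mkposreal _ Hrp).
  assert (Hr : r <= x0 / 2) by (simpl; lra).
  apply (derivable_pt_lim_CVU
           (fun N x => sum_f_R0 (fun n => Pop w (dn w n) x) N)
           (fun N y => 2 * y * w y ^ 4 * sum_f_R0 (fun n => dn w n y) N)
           (pf w) (fun y => 2 * y * w y ^ 4 * zf w y) x0 x0 r).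
  - unfold Boule. rewrite Rminus_diag, Rabs_R0. apply cond_pos.
  - intros y n Hy. pose proof (ball_pos x0 r y Hx0 Hr Hy).
    apply is_derive_Reals.
    rewrite <- sum_mult_l.
    apply sum_derive. intros m. apply Pop_deriv; auto. apply dn_cont; auto. lra.
  - apply cvu_pointwise.
    apply (cvu_series _ (fun n => (2 * x0) ^ 2 * (/ INR (fact n) * ((2 * x0) ^ 2) ^ n)) ((2 * x0) ^ 2 * exp ((2 * x0) ^ 2))).
    + apply (is_series_scal_l (K:=R_AbsRing) (V:=R_NormedModule)). apply exp_series.
    + intros n y' Hy'. apply (Pop_ball_bnd w Hw x0 Hx0 r Hr n y' Hy').
  - apply (cvu_scale _ _ (fun y => 2 * y * w y ^ 4) (2 * (2 * x0))).
    + apply (cvu_series _ (fun n => / INR (fact n) * ((2 * x0) ^ 2) ^ n) (exp ((2 * x0) ^ 2))). apply exp_series.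
      intros n y' Hy'. apply (dn_ball_bnd w Hw x0 Hx0 r Hr n y' Hy').
    + intros y Hy. pose proof (ball_pos x0 r y Hx0 Hr Hy).
      pose proof (w_nonneg w Hw y ltac:(lra)).
      assert (0 <= w y ^ 4 <= 1) by (split; [apply pow_le|apply pow_le_1]; lra).
      rewrite Rabs_right by (apply Rle_ge; apply Rmult_le_pos; lra).
      nra.
  - intros y Hy. pose proof (ball_pos x0 r y Hx0 Hr Hy).
    apply cmul.
    + apply cmul; [apply cmul; [apply cconst|apply cid]|apply cpow; apply w_cont_pt; auto; lra].
    + apply (zf_cont_ball w Hw x0 Hx0 r Hr y Hy).
Qed.

Lemma zf_deriv w : is_profile w -> forall x0, 0 < x0 ->
  derivable_pt_lim (zf w) x0 (/ (x0 * w x0 ^ 2) * pf w x0).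
Proof.
  intros Hw x0 Hx0.
  assert (Hrp : 0 < x0 / 2) by lra. set (r := mkposreal _ Hrp).
  assert (Hr : r <= x0 / 2) by (simpl; lra).
  assert (Hwm : 0 < w (x0 / 2)) by (apply w_pos; auto).
  set (m := x0 / 2 * w (x0 / 2) ^ 2).
  assert (Hm : 0 < m) by (unfold m; apply Rmult_lt_0_compat; [lra|apply pow_lt; lra]).
  apply (derivable_pt_lim_CVU
           (fun N x => sum_f_R0 (fun n => dn w n x) (S N))
           (fun N y => / (y * w y ^ 2) * sum_f_R0 (fun n => Pop w (dn w n) y) N)
           (zf w) (fun y => / (y * w y ^ 2) * pf w y) x0 x0 r).
  - unfold Boule. rewrite Rminus_diag, Rabs_R0. apply cond_pos.
  - intros y n Hy. pose proof (ball_pos x0 r y Hx0 Hr Hy).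
    apply is_derive_Reals.
    apply (is_derive_ext (fun x => 1 + sum_f_R0 (fun k => dn w (S k) x) n)).
    { intros t. rewrite (decomp_sum (fun k => dn w k t) (S n)) by lia. reflexivity. }
    rewrite <- sum_mult_l.
    replace (sum_f_R0 (fun k => / (y * w y ^ 2) * Pop w (dn w k) y) n)
      with (0 + sum_f_R0 (fun k => Gop w (dn w k) y) n).
    2:{ rewrite Rplus_0_l. apply sum_eq. intros i _. rewrite Gop_pos_eq by lra.
        unfold Rdiv. ring. }
    apply is_derive_Reals. apply derivable_pt_lim_plus.
    + apply derivable_pt_lim_const.
    + apply is_derive_Reals. apply sum_derive. intros k. simpl dn.
      eapply Top_deriv; eauto. apply dn_cont; auto. apply dn_bnd; auto. lra.
  - apply (cvu_pointwise (fun N x => sum_f_R0 (fun n => dn w n x) (S N)) (zf w) x0 r). apply (cvu_shift (fun N x => sum_f_R0 (fun n => dn w n x) N)).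
    apply (cvu_series _ (fun n => / INR (fact n) * ((2 * x0) ^ 2) ^ n) (exp ((2 * x0) ^ 2))).
    apply exp_series.
    intros n y' Hy'. apply (dn_ball_bnd w Hw x0 Hx0 r Hr n y' Hy').
  - apply (cvu_scale _ _ (fun y => / (y * w y ^ 2)) (/ m)).
    + apply (cvu_series _ (fun n => (2 * x0) ^ 2 * (/ INR (fact n) * ((2 * x0) ^ 2) ^ n)) ((2 * x0) ^ 2 * exp ((2 * x0) ^ 2))).
      * apply (is_series_scal_l (K:=R_AbsRing) (V:=R_NormedModule)). apply exp_series.
      * intros n y' Hy'. apply (Pop_ball_bnd w Hw x0 Hx0 r Hr n y' Hy').
    + intros y Hy. pose proof (ball_pos x0 r y Hx0 Hr Hy).
      assert (Hwy : w (x0 / 2) <= w y) by (apply (w_mono w Hw); lra).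
      assert (w (x0/2) ^ 2 <= w y ^ 2) by (apply pow_incr; lra).
      assert (m <= y * w y ^ 2) by (unfold m; apply Rmult_le_compat; try lra; apply pow_le; lra).
      rewrite Rabs_right by (apply Rle_ge; left; apply Rinv_0_lt_compat; lra).
      apply Rinv_le_contravar; lra.
  - intros y Hy. pose proof (ball_pos x0 r y Hx0 Hr Hy).
    apply cmul.
    + apply (continuity_pt_ext (fun y => 1 / (y * w y ^ 2))); [intros; unfold Rdiv; ring|].
      apply cdiv; [apply cconst| apply cmul; [apply cid|apply cpow; apply w_cont_pt; auto; lra]|].
      pose proof (w_pos w Hw y ltac:(lra)). assert (0 < w y ^ 2) by (apply pow_lt; lra). nra.
    + apply (pf_cont_ball w Hw x0 Hx0 r Hr y Hy).
Qed.

Lemma Series_nonneg (a : nat -> R) : (forall n, 0 <= a n) -> ex_series a -> 0 <= Series a.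
Proof.
  intros H Hex.
  assert (H0 : Series (fun _ => 0) = 0).
  { rewrite (Series_ext (fun _ => 0) (fun n => 0 * 1)) by (intros; ring).
    rewrite Series_scal_l. ring. }
  rewrite <- H0. apply Series_le; auto. intros n. split; [lra|auto].
Qed.

Lemma dn_ex w : is_profile w -> forall x, 0 <= x -> ex_series (fun n => dn w n x).
Proof.
  intros Hw x Hx. apply (ex_series_le (V:=R_CompleteNormedModule) _ (fun n => / INR (fact n) * (x ^ 2) ^ n)).
  - intros n. change (norm (dn w n x)) with (Rabs (dn w n x)).
    destruct (dn_bnd w Hw n x Hx). rewrite Rabs_right by lra. rewrite <- pow_mult. auto.
  - eexists. apply exp_series.
Qed.

Lemma zf_ge1 w : is_profile w -> forall x, 0 <= x -> 1 <= zf w x.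
Proof.
  intros Hw x Hx. unfold zf. rewrite Series_incr_1 by (apply dn_ex; auto).
  simpl dn at 1.
  assert (0 <= Series (fun k => dn w (S k) x)); [|lra].
  apply Series_nonneg.
  - intros n. apply dn_bnd; auto.
  - apply (ex_series_incr_1 (K:=R_AbsRing) (V:=R_NormedModule) (fun n => dn w n x)). apply dn_ex; auto.
Qed.

Lemma zf_le_exp w : is_profile w -> forall x, 0 <= x -> zf w x <= exp (x ^ 2).
Proof.
  intros Hw x Hx. unfold zf. rewrite <- (is_series_unique _ _ (exp_series (x^2))).
  apply Series_le.
  - intros n. destruct (dn_bnd w Hw n x Hx). rewrite <- pow_mult. auto.
  - eexists. apply exp_series.
Qed.

Lemma pf_nonneg w : is_profile w -> forall x, 0 <= x -> 0 <= pf w x.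
Proof.
  intros Hw x Hx. unfold pf. apply Series_nonneg.
  - intros n. apply Pop_dn_bnd; auto.
  - apply (ex_series_le (V:=R_CompleteNormedModule) _ (fun n => x ^ 2 * (/ INR (fact n) * (x ^ 2) ^ n))).
    + intros n. change (norm (Pop w (dn w n) x)) with (Rabs (Pop w (dn w n) x)).
      destruct (Pop_dn_bnd w Hw n x Hx). rewrite Rabs_right by lra.
      rewrite <- pow_mult. replace (S (S (2 * n))) with (2 + 2 * n)%nat in * by lia.
      rewrite pow_add in *. lra.
    + eexists. apply (is_series_scal_l (K:=R_AbsRing) (V:=R_NormedModule)). apply exp_series.
Qed.

Lemma zf_is_derive w : is_profile w -> forall x, 0 < x -> is_derive (zf w) x (pf w x / (x * w x ^ 2)).
Proof.
  intros Hw x Hx. apply is_derive_Reals.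
  replace (pf w x / (x * w x ^ 2)) with (/ (x * w x ^ 2) * pf w x) by (unfold Rdiv; ring).
  apply zf_deriv; auto.
Qed.

Lemma pf_is_derive w : is_profile w -> forall x, 0 < x -> is_derive (pf w) x (2 * x * w x ^ 4 * zf w x).
Proof. intros Hw x Hx. apply is_derive_Reals. apply pf_deriv; auto. Qed.

Lemma zf_Derive w : is_profile w -> forall x, 0 < x -> Derive (zf w) x = pf w x / (x * w x ^ 2).
Proof. intros Hw x Hx. apply is_derive_unique. apply zf_is_derive; auto. Qed.

Lemma zf_DDerive w : is_profile w -> forall x, 0 < x ->
  is_derive (Derive (zf w)) x
   ((2 * x * w x ^ 4 * zf w x * (x * w x ^ 2) - pf w x * (w x ^ 2 + x * (2 * w x * Derive w x)))
     / (x * w x ^ 2) ^ 2).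
Proof.
  intros Hw x Hx.
  pose proof (w_pos w Hw x Hx) as Hwx.
  apply (is_derive_ext_loc (fun y => pf w y / (y * w y ^ 2))).
  { apply (locally_interval _ x 0 p_infty); simpl; auto.
    intros y Hy _. rewrite zf_Derive; auto. }
  assert (Hp := pf_is_derive w Hw x Hx).
  assert (Hd : ex_derive w x) by (apply w_d1; auto).
  auto_derive.
  - repeat split; auto. eexists; eauto. intros Habs.
    assert (0 < w x ^ 2) by (apply pow_lt; lra). nra.
  - change (fun x0 : R => pf w x0) with (pf w). change (fun x0 : R => w x0) with w.
    rewrite (is_derive_unique _ _ _ Hp). field. split; lra.
Qed.

Lemma zf_solves w : is_profile w -> solves_z_ode w (zf w).
Proof.
  intros Hw. split.
  - intros r Hr. split.
    + eexists. apply zf_is_derive; auto.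
    + eexists. apply zf_DDerive; auto.
  - intros r Hr.
    pose proof (w_pos w Hw r Hr) as Hwr.
    rewrite (is_derive_unique _ _ _ (zf_DDerive w Hw r Hr)).
    rewrite zf_Derive by auto.
    field. split; lra.
Qed.

Definition Yf (w z : R -> R) (r : R) : R := sqrt r * w r * z r.
Definition rho (w z : R -> R) (r : R) : R := / (2 * r) + Derive w r / w r + Derive z r / z r.
Definition Uf (w : R -> R) (r : R) : R := 3 * w r ^ 2 - 1 + 3 / (4 * r ^ 2).

Lemma Yf_deriv w z : is_profile w -> solves_z_ode w z -> (forall r, 0 < r -> 0 < z r) ->
  forall r, 0 < r -> is_derive (Yf w z) r (rho w z r * Yf w z r).
Proof.
  intros Hw [Hz2 Hzo] Hzp r Hr.
  pose proof (w_pos w Hw r Hr). pose proof (Hzp r Hr).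
  assert (Hdw := w_d1 w Hw r Hr). assert (Hdz := proj1 (Hz2 r Hr)).
  unfold Yf. auto_derive.
  - repeat split; auto.
  - unfold rho. assert (Hs := sqrt_lt_R0 r Hr). assert (Hss := sqrt_sqrt r ltac:(lra)).
    change (fun x : R => w x) with w. change (fun x : R => z x) with z.
    replace (2 * r) with (2 * (sqrt r * sqrt r)) by (rewrite Hss; ring).
    field. repeat split; lra.
Qed.

Lemma rho_deriv w z : is_profile w -> solves_z_ode w z -> (forall r, 0 < r -> 0 < z r) ->
  forall r, 0 < r -> is_derive (rho w z) r (Uf w r - rho w z r ^ 2).
Proof.
  intros Hw [Hz2 Hzo] Hzp r Hr.
  pose proof (w_pos w Hw r Hr). pose proof (Hzp r Hr).
  assert (Hdw := w_d1 w Hw r Hr). assert (Hdz := proj1 (Hz2 r Hr)).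
  assert (Hddw := w_d2 w Hw r Hr). assert (Hddz := proj2 (Hz2 r Hr)).
  assert (Ew := w_ode w Hw r Hr). assert (Ez := Hzo r Hr).
  unfold rho. auto_derive.
  - repeat split; auto; lra.
  - change (fun x : R => w x) with w. change (fun x : R => z x) with z.
    change (fun x : R => Derive w x) with (Derive w). change (fun x : R => Derive z x) with (Derive z).
    replace (Derive (Derive w) r) with (- (/ r * Derive w r - / r ^ 2 * w r + (1 - w r ^ 2) * w r)) by lra.
    replace (Derive (Derive z) r) with (- ((2 * Derive w r / w r + / r) * Derive z r) + 2 * w r ^ 2 * z r) by lra.
    unfold Uf. field. repeat split; lra.
Qed.

Lemma rho_pos w z : is_profile w -> solves_z_ode w z -> (forall r, 0 < r -> 0 < z r) ->
  (forall r, 0 < r -> 0 <= Derive z r) -> forall r, 0 < r -> 0 < rho w z r.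
Proof.
  intros Hw Hz Hzp Hzd r Hr. unfold rho.
  pose proof (w_pos w Hw r Hr). pose proof (Hzp r Hr). pose proof (wd_pos w Hw r Hr).
  pose proof (Hzd r Hr).
  assert (0 < / (2 * r)) by (apply Rinv_0_lt_compat; lra).
  assert (0 < Derive w r / w r) by (apply Rdiv_lt_0_compat; lra).
  assert (0 <= Derive z r / z r) by (apply Rmult_le_pos; [lra|left; apply Rinv_0_lt_compat; lra]).
  lra.
Qed.

Lemma Yf_pos w z : is_profile w -> (forall r, 0 < r -> 0 < z r) -> forall r, 0 < r -> 0 < Yf w z r.
Proof.
  intros Hw Hzp r Hr. unfold Yf. pose proof (w_pos w Hw r Hr). pose proof (Hzp r Hr).
  pose proof (sqrt_lt_R0 r Hr).
  apply Rmult_lt_0_compat; [apply Rmult_lt_0_compat|]; lra.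
Qed.

Lemma Y_upper w z : is_profile w -> solves_z_ode w z -> (forall r, 0 < r -> 0 < z r) ->
  (forall r, 0 < r -> 0 <= Derive z r) ->
  exists C, forall r, 1 <= r -> Yf w z r <= C * exp (sqrt 2 * r).
Proof.
  intros Hw Hz Hzp Hzd.
  pose proof sqrt2_bounds as Hs2. set (s := sqrt 2) in *.
  assert (Hss : s * s = 2) by (apply sqrt_sqrt; lra).
  set (G2 := fun r => exp (2 * s * r) * (rho w z r - s - / r ^ 2)).
  assert (HG2 : forall r, 1 <= r -> G2 r <= G2 1).
  { intros r Hr.
    apply (decr_deriv G2 (fun r => exp (2 * s * r) * (2 * s * (rho w z r - s - / r ^ 2)
               + (Uf w r - rho w z r ^ 2) + 2 / r ^ 3)) 1 r Hr).
    - intros x Hx. unfold G2.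
      assert (Hrd := rho_deriv w z Hw Hz Hzp x ltac:(lra)).
      auto_derive.
      + repeat split; [eexists; eauto|intro; nra].
      + change (fun x0 : R => rho w z x0) with (rho w z).
        rewrite (is_derive_unique _ _ _ Hrd). field. lra.
    - intros x Hx. 
      assert (0 < exp (2 * s * x)) by apply exp_pos.
      cut (2 * s * (rho w z x - s - / x ^ 2) + (Uf w x - rho w z x ^ 2) + 2 / x ^ 3 <= 0).
      { intros. nra. }
      pose proof (w_pos w Hw x ltac:(lra)).
      unfold Uf. set (q := / x). set (e := rho w z x - s).
      replace (rho w z x) with (s + e) by (unfold e; ring).
      assert (Hq : 0 < q <= 1).
      { unfold q. split; [apply Rinv_0_lt_compat; lra|].
        rewrite <- Rinv_1. apply Rinv_le_contravar; lra. }
      replace (/ x ^ 2) with (q ^ 2) by (unfold q; field; lra).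
      replace (3 / (4 * x ^ 2)) with (3 / 4 * q ^ 2) by (unfold q; field; lra).
      replace (2 / x ^ 3) with (2 * q ^ 3) by (unfold q; field; lra).
      assert (w x ^ 2 < 1) by (simpl; nra).
      assert (0 <= e ^ 2) by nra.
      assert (q ^ 2 * (- 2 * s + 3/4 + 2 * q) <= 0).
      { assert (0 < q ^ 2) by nra. nra. }
      nra. }
  set (B := Rmax 0 (G2 1)).
  assert (HB : 0 <= B) by apply Rmax_l.
  assert (Hrho : forall r, 1 <= r -> rho w z r <= s + / r ^ 2 + B * exp (- (2 * s * r))).
  { intros r Hr. specialize (HG2 r Hr). unfold G2 in HG2.
    assert (G2 1 <= B) by apply Rmax_r. unfold G2 in H.
    assert (He : exp (2 * s * r) * exp (- (2 * s * r)) = 1) by (rewrite <- exp_plus; replace (2 * s * r + - (2 * s * r)) with 0 by ring; apply exp_0).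
    assert (0 < exp (- (2 * s * r))) by apply exp_pos.
    assert (0 < exp (2 * s * r)) by apply exp_pos.
    assert (Hx : exp (2 * s * r) * (rho w z r - s - / r ^ 2) <= B) by lra.
    apply Rmult_le_compat_l with (r := exp (- (2 * s * r))) in Hx; [|lra].
    rewrite <- Rmult_assoc, (Rmult_comm (exp (- _))), He, Rmult_1_l in Hx. lra. }
  set (phi := fun r => s * r - / r - B / (2 * s) * exp (- (2 * s * r))).
  set (F := fun r => Yf w z r * exp (- phi r)).
  assert (HF : forall r, 1 <= r -> F r <= F 1).
  { intros r Hr.
    apply (decr_deriv F (fun r => Yf w z r * exp (- phi r) * (rho w z r - (s + / r ^ 2 + B * exp (- (2 * s * r))))) 1 r Hr).
    - intros x Hx. unfold F, phi.
      assert (HYd := Yf_deriv w z Hw Hz Hzp x ltac:(lra)).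
      auto_derive.
      + repeat split; [eexists; eauto|lra].
      + change (fun x0 : R => Yf w z x0) with (Yf w z).
        rewrite (is_derive_unique _ _ _ HYd). replace (s * x + - / x + - (B / (2 * s) * exp (- (2 * s * x)))) with (s * x - / x - B / (2 * s) * exp (- (2 * s * x))) by ring. field. split; lra.
    - intros x Hx. specialize (Hrho x ltac:(lra)).
      pose proof (Yf_pos w z Hw Hzp x ltac:(lra)).
      assert (0 < exp (- phi x)) by apply exp_pos.
      assert (0 < Yf w z x * exp (- phi x)) by (apply Rmult_lt_0_compat; lra).
      nra. }
  exists (F 1). intros r Hr. specialize (HF r Hr). unfold F in HF.
  assert (Hp : phi r <= s * r).
  { unfold phi. assert (0 < / r) by (apply Rinv_0_lt_compat; lra).
    assert (0 <= B / (2 * s) * exp (- (2 * s * r))).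
    { apply Rmult_le_pos; [apply Rmult_le_pos; [lra|left; apply Rinv_0_lt_compat; lra]|left; apply exp_pos]. }
    lra. }
  assert (He : exp (- phi r) * exp (phi r) = 1) by (rewrite <- exp_plus; replace (- phi r + phi r) with 0 by ring; apply exp_0).
  assert (exp (phi r) <= exp (s * r)) by (destruct Hp as [Hp|Hp]; [left; apply exp_increasing; auto|rewrite Hp; lra]).
  assert (0 < exp (phi r)) by apply exp_pos.
  assert (0 <= F 1).
  { unfold F. pose proof (Yf_pos w z Hw Hzp 1 ltac:(lra)). pose proof (exp_pos (- phi 1)). nra. }
  apply Rmult_le_compat_r with (r := exp (phi r)) in HF; [|lra].
  rewrite Rmult_assoc, He, Rmult_1_r in HF.
  eapply Rle_trans; [apply HF|]. apply Rmult_le_compat_l; auto.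
Qed.

Lemma Y_lower w z : is_profile w -> solves_z_ode w z -> (forall r, 0 < r -> 0 < z r) ->
  (forall r, 0 < r -> 0 <= Derive z r) ->
  exists c M, 0 < c /\ 1 <= M /\ forall r, M <= r -> c * exp (sqrt 2 * r) <= Yf w z r.
Proof.
  intros Hw Hz Hzp Hzd.
  pose proof sqrt2_bounds as Hs2. set (s := sqrt 2) in *.
  assert (Hss : s * s = 2) by (apply sqrt_sqrt; lra).
  destruct (w_large w Hw) as [M0 [HM0 HwM]].
  assert (HU : forall r, M0 < r -> 2 - 6 / r ^ 2 <= Uf w r).
  { intros r Hr. destruct (HwM r Hr) as [_ H]. unfold Uf.
    assert (0 <= 3 / (4 * r ^ 2)).
    { apply Rmult_le_pos; [lra|left; apply Rinv_0_lt_compat; apply Rmult_lt_0_compat; [lra|apply pow_lt; lra]]. }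
    lra. }
  set (r0 := M0 + 4).
  set (h := fun r => s - 8 / r ^ 2).
  assert (HA : exists r1, r0 <= r1 /\ h r1 <= rho w z r1).
  { apply NNPP. intros Hn.
    assert (Hlt : forall r, r0 <= r -> rho w z r < h r).
    { intros r Hr. apply Rnot_le_lt. intros Hle. apply Hn. exists r. auto. }
    set (J := fun r => (s - rho w z r) * exp (r / 2)).
    assert (HJ : forall r, r0 <= r -> J r <= J r0).
    { intros r Hr.
      apply (decr_deriv J (fun r => exp (r / 2) * (rho w z r ^ 2 - Uf w r + (s - rho w z r) / 2)) r0 r Hr).
      - intros x Hx. unfold J.
        assert (Hrd := rho_deriv w z Hw Hz Hzp x ltac:(unfold r0 in *; lra)).
        auto_derive.
        + repeat split. eexists; eauto.
        + change (fun x0 : R => rho w z x0) with (rho w z).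
          rewrite (is_derive_unique _ _ _ Hrd). unfold Rdiv. ring.
      - intros x Hx. assert (Hx0 : 0 < x) by (unfold r0 in *; lra).
        specialize (Hlt x ltac:(lra)). specialize (HU x ltac:(unfold r0 in *; lra)).
        pose proof (rho_pos w z Hw Hz Hzp Hzd x Hx0).
        pose proof (exp_pos (x / 2)).
        unfold h in Hlt. set (e := s - rho w z x) in *.
        replace (rho w z x) with (s - e) in * by (unfold e; ring).
        assert (Hq : 0 < / x ^ 2) by (apply Rinv_0_lt_compat, pow_lt; lra).
        unfold Rdiv in *.
        assert (He : 8 * / x ^ 2 < e) by lra.
        assert (e <= s) by lra.
        assert ((s - e) ^ 2 - Uf w x + e * / 2 <= 0).
        { assert (e * e <= s * e) by nra. nra. }
        nra. }
    set (A := J r0).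
    set (r := r0 + 27 * Rabs A + 1).
    assert (Hr : r0 <= r) by (unfold r; pose proof (Rabs_pos A); lra).
    assert (Hr0 : 4 < r) by (unfold r, r0 in *; pose proof (Rabs_pos A); lra).
    specialize (HJ r Hr). specialize (Hlt r Hr). unfold J, h in *.
    pose proof (exp_cube_bound (r / 2) ltac:(lra)) as Hc.
    assert (He : 8 / r ^ 2 * exp (r / 2) <= A).
    { eapply Rle_trans; [|apply HJ]. apply Rmult_le_compat_r; [left; apply exp_pos|lra]. }
    assert (Hr2 : 0 < r ^ 2) by (apply pow_lt; lra).
    assert (8 * exp (r / 2) <= A * r ^ 2).
    { apply Rmult_le_compat_r with (r := r ^ 2) in He; [|lra].
      replace (8 / r ^ 2 * exp (r / 2) * r ^ 2) with (8 * exp (r / 2)) in He by (field; lra).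
      lra. }
    assert (r ^ 3 <= 216 * exp (r / 2)).
    { replace (r ^ 3) with (8 * (r / 2) ^ 3) by (simpl; field). lra. }
    assert (r ^ 3 <= 27 * A * r ^ 2) by nra.
    assert (r <= 27 * A).
    { replace (r ^ 3) with (r * r ^ 2) in * by ring. apply Rmult_le_reg_r with (r ^ 2); lra. }
    pose proof (Rle_abs A). assert (r = r0 + 27 * Rabs A + 1) by reflexivity. unfold r0 in *. lra. }
  destruct HA as [r1 [Hr1 Hhr1]].
  assert (Hr1p : 4 < r1) by (unfold r0 in *; lra).
  set (E := fun r => exp (s * r + 8 / r)).
  set (K := fun r => Yf w z r * E r * (rho w z r - h r)).
  assert (HK : forall r, r1 <= r -> K r1 <= K r).
  { intros r Hr.
    apply (incr_deriv K (fun r => Yf w z r * E r * (Uf w r - h r ^ 2 - 16 / r ^ 3)) r1 r Hr).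
    - intros x Hx. unfold K, E, h.
      assert (Hrd := rho_deriv w z Hw Hz Hzp x ltac:(lra)).
      assert (HYd := Yf_deriv w z Hw Hz Hzp x ltac:(lra)).
      auto_derive.
      + repeat split; try (eexists; eauto); intro; nra.
      + change (fun x0 : R => rho w z x0) with (rho w z).
        change (fun x0 : R => Yf w z x0) with (Yf w z).
        rewrite (is_derive_unique _ _ _ Hrd), (is_derive_unique _ _ _ HYd).
        unfold Rdiv. field. lra.
    - intros x Hx. specialize (HU x ltac:(unfold r0 in *; lra)).
      pose proof (Yf_pos w z Hw Hzp x ltac:(lra)).
      assert (0 < E x) by apply exp_pos.
      apply Rmult_le_pos; [apply Rmult_le_pos; lra|].
      unfold h. set (q := / x).
      assert (Hq : 0 < q <= / 4).
      { unfold q. split; [apply Rinv_0_lt_compat; lra|]. apply Rinv_le_contravar; lra. }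
      replace (6 / x ^ 2) with (6 * q ^ 2) in HU by (unfold q; field; lra).
      replace (8 / x ^ 2) with (8 * q ^ 2) by (unfold q; field; lra).
      replace (16 / x ^ 3) with (16 * q ^ 3) by (unfold q; field; lra).
      assert (0 <= q ^ 2 * (16 * s - 6 - 64 * q ^ 2 - 16 * q)).
      { apply Rmult_le_pos; [apply pow_le; lra|]. nra. }
      nra. }
  assert (Hrh : forall r, r1 <= r -> h r <= rho w z r).
  { intros r Hr. specialize (HK r Hr). unfold K in HK.
    pose proof (Yf_pos w z Hw Hzp r ltac:(lra)). pose proof (Yf_pos w z Hw Hzp r1 ltac:(lra)).
    assert (0 < E r) by apply exp_pos. assert (0 < E r1) by apply exp_pos.
    assert (0 <= Yf w z r1 * E r1 * (rho w z r1 - h r1)) by (apply Rmult_le_pos; [apply Rmult_le_pos|]; lra).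
    assert (0 < Yf w z r * E r) by (apply Rmult_lt_0_compat; lra).
    nra. }
  set (F := fun r => Yf w z r * exp (- (s * r + 8 / r))).
  assert (HF : forall r, r1 <= r -> F r1 <= F r).
  { intros r Hr.
    apply (incr_deriv F (fun r => Yf w z r * exp (- (s * r + 8 / r)) * (rho w z r - h r)) r1 r Hr).
    - intros x Hx. unfold F, h.
      assert (HYd := Yf_deriv w z Hw Hz Hzp x ltac:(lra)).
      auto_derive.
      + repeat split; try (eexists; eauto); intro; nra.
      + change (fun x0 : R => Yf w z x0) with (Yf w z).
        rewrite (is_derive_unique _ _ _ HYd).
        unfold Rdiv. field. lra.
    - intros x Hx. specialize (Hrh x ltac:(lra)).
      pose proof (Yf_pos w z Hw Hzp x ltac:(lra)).
      pose proof (exp_pos (- (s * x + 8 / x))).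
      apply Rmult_le_pos; [apply Rmult_le_pos|]; lra. }
  exists (F r1), r1. split; [|split; [lra|]].
  - unfold F. apply Rmult_lt_0_compat; [apply Yf_pos; auto; lra|apply exp_pos].
  - intros r Hr. specialize (HF r Hr).
    assert (Hx : exp (- (s * r + 8 / r)) * exp (s * r + 8 / r) = 1).
    { rewrite <- exp_plus. replace (- (s * r + 8 / r) + (s * r + 8 / r)) with 0 by ring. apply exp_0. }
    assert (exp (s * r) <= exp (s * r + 8 / r)).
    { assert (0 < 8 / r) by (apply Rdiv_lt_0_compat; lra).
      left. apply exp_increasing. lra. }
    assert (0 < F r1) by (unfold F; apply Rmult_lt_0_compat; [apply Yf_pos; auto; lra|apply exp_pos]).
    assert (HYr : Yf w z r = F r * exp (s * r + 8 / r)).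
    { unfold F. rewrite Rmult_assoc, Hx. ring. }
    rewrite HYr.
    assert (0 < exp (s * r)) by apply exp_pos.
    apply Rle_trans with (F r1 * exp (s * r + 8 / r)).
    - apply Rmult_le_compat_l; lra.
    - apply Rmult_le_compat_r; [left; apply exp_pos|lra].
Qed.

Definition gI (w : R -> R) (r : R) : R := / (r * w r ^ 2 * zf w r ^ 2).
Definition II (w : R -> R) (r : R) : R := RInt (gI w) 1 r.

Lemma zf_pos w : is_profile w -> forall r, 0 < r -> 0 < zf w r.
Proof. intros Hw r Hr. pose proof (zf_ge1 w Hw r ltac:(lra)). lra. Qed.

Lemma zf_cont w : is_profile w -> forall r, 0 < r -> continuity_pt (zf w) r.
Proof. intros Hw r Hr. apply (is_derive_cont _ _ _ (zf_is_derive w Hw r Hr)). Qed.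

Lemma gI_pos w : is_profile w -> forall r, 0 < r -> 0 < gI w r.
Proof.
  intros Hw r Hr. unfold gI. apply Rinv_0_lt_compat.
  pose proof (w_pos w Hw r Hr). pose proof (zf_pos w Hw r Hr).
  apply Rmult_lt_0_compat; [apply Rmult_lt_0_compat|]; try apply pow_lt; lra.
Qed.

Lemma gI_cont w : is_profile w -> forall r, 0 < r -> continuity_pt (gI w) r.
Proof.
  intros Hw r Hr. unfold gI.
  apply (continuity_pt_ext (fun y => 1 / (y * w y ^ 2 * zf w y ^ 2))); [intros; unfold Rdiv; ring|].
  pose proof (gI_pos w Hw r Hr). unfold gI in H.
  apply cdiv; [apply cconst| |].
  - apply cmul; [apply cmul; [apply cid|apply cpow; apply w_cont_pt; auto; lra]|apply cpow; apply zf_cont; auto].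
  - intro Habs. rewrite Habs in H. rewrite Rinv_0 in H. lra.
Qed.

Lemma gI_ex w : is_profile w -> forall a b, 0 < a -> 0 < b -> ex_RInt (gI w) a b.
Proof.
  intros Hw a b Ha Hb. apply (ex_RInt_continuous (V:=R_CompleteNormedModule)).
  intros z Hz. apply cont_of_pt. apply gI_cont; auto.
  destruct Hz as [Hz _]. eapply Rlt_le_trans; [|apply Hz]. apply Rmin_glb_lt; auto.
Qed.

Lemma II_deriv w : is_profile w -> forall r, 0 < r -> is_derive (II w) r (gI w r).
Proof.
  intros Hw r Hr. unfold II.
  apply (is_derive_RInt (V:=R_CompleteNormedModule) _ _ 1).
  - apply (locally_interval _ r 0 p_infty); simpl; auto.
    intros y Hy _. apply (RInt_correct (V:=R_CompleteNormedModule)).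
    apply gI_ex; auto; lra.
  - apply cont_of_pt. apply gI_cont; auto.
Qed.

Lemma II_1 w : II w 1 = 0.
Proof. unfold II. apply (RInt_point (V:=R_CompleteNormedModule)). Qed.

Lemma II_mono w : is_profile w -> forall a b, 0 < a <= b -> II w a <= II w b.
Proof.
  intros Hw a b Hab. apply (incr_deriv (II w) (gI w) a b); try lra.
  - intros x Hx. apply II_deriv; auto; lra.
  - intros x Hx. left. apply gI_pos; auto; lra.
Qed.

Lemma gI_Y w : is_profile w -> forall r, 0 < r -> gI w r = / (Yf w (zf w) r) ^ 2.
Proof.
  intros Hw r Hr. unfold gI, Yf.
  pose proof (w_pos w Hw r Hr). pose proof (zf_pos w Hw r Hr).
  pose proof (sqrt_lt_R0 r Hr). assert (Hs := sqrt_sqrt r ltac:(lra)).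
  f_equal. simpl. rewrite <- Hs at 1. ring.
Qed.

Lemma zf_Dpos w : is_profile w -> forall r, 0 < r -> 0 <= Derive (zf w) r.
Proof.
  intros Hw r Hr. rewrite zf_Derive by auto.
  pose proof (pf_nonneg w Hw r ltac:(lra)). pose proof (w_pos w Hw r Hr).
  apply Rmult_le_pos; auto. left. apply Rinv_0_lt_compat.
  apply Rmult_lt_0_compat; [lra|apply pow_lt; lra].
Qed.

Lemma II_tail w : is_profile w -> exists K M, 0 <= K /\ 1 <= M /\
  forall r t, M <= r <= t -> II w t <= II w r + K * exp (- (2 * sqrt 2 * r)).
Proof.
  intros Hw.
  destruct (Y_lower w (zf w) Hw (zf_solves w Hw) (zf_pos w Hw) (zf_Dpos w Hw)) as [c [M [Hc [HM HY]]]].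
  pose proof sqrt2_bounds as Hs2. set (s := sqrt 2) in *.
  set (K := / (2 * s * c ^ 2)).
  assert (HK : 0 < K) by (unfold K; apply Rinv_0_lt_compat; apply Rmult_lt_0_compat; [lra|apply pow_lt; lra]).
  exists K, M. split; [lra|split; [auto|]].
  intros r t Hrt.
  set (H := fun t => II w t + K * exp (- (2 * s * t))).
  assert (H t <= H r); [|unfold H in *; assert (0 < K * exp (- (2 * s * t))) by (apply Rmult_lt_0_compat; [lra|apply exp_pos]); lra].
  apply (decr_deriv H (fun t => gI w t - / c ^ 2 * exp (- (2 * s * t))) r t); [lra| |].
  - intros x Hx. unfold H.
    assert (Hd := II_deriv w Hw x ltac:(lra)).
    auto_derive.
    + eexists; eauto.
    + change (fun x0 => II w x0) with (II w). rewrite (is_derive_unique _ _ _ Hd).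
      unfold K. field. split; lra.
  - intros x Hx. rewrite (gI_Y w Hw) by lra.
    specialize (HY x ltac:(lra)).
    pose proof (exp_pos (s * x)).
    assert (Hce : 0 < c * exp (s * x)) by (apply Rmult_lt_0_compat; lra).
    assert (He : exp (- (2 * s * x)) = / (exp (s * x)) ^ 2).
    { rewrite exp_Ropp. f_equal. simpl. rewrite Rmult_1_r, <- exp_plus. f_equal. ring. }
    rewrite He.
    assert (Hinv : / (Yf w (zf w) x) ^ 2 <= / (c * exp (s * x)) ^ 2).
    { apply Rinv_le_contravar; [apply pow_lt; lra|]. apply pow_incr. lra. }
    rewrite Rpow_mult_distr, Rinv_mult in Hinv. lra.
Qed.

Lemma II_near0 w : is_profile w -> exists K, 0 <= K /\ forall r, 0 < r <= 1 -> - II w r <= K / r ^ 2.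
Proof.
  intros Hw. destruct (w_lower0 w Hw) as [c0 [Hc0 Hlow]].
  set (K := / (2 * c0 ^ 2)).
  assert (HK : 0 < K) by (unfold K; apply Rinv_0_lt_compat; apply Rmult_lt_0_compat; [lra|apply pow_lt; lra]).
  exists K. split; [lra|]. intros r Hr.
  set (H := fun t => II w t + K / t ^ 2).
  assert (H 1 <= H r).
  { apply (decr_deriv H (fun t => gI w t - / c0 ^ 2 * / t ^ 3) r 1); [lra| |].
    - intros x Hx. unfold H.
      assert (Hd := II_deriv w Hw x ltac:(lra)).
      auto_derive.
      + repeat split; try (eexists; eauto). intro; nra.
      + change (fun x0 => II w x0) with (II w). rewrite (is_derive_unique _ _ _ Hd).
        unfold K. field. split; lra.
    - intros x Hx. unfold gI.
      specialize (Hlow x ltac:(lra)).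
      pose proof (zf_ge1 w Hw x ltac:(lra)).
      assert (0 < c0 * x) by nra.
      assert (Hb : c0 ^ 2 * x ^ 3 <= x * w x ^ 2 * zf w x ^ 2).
      { assert ((c0 * x) ^ 2 <= w x ^ 2) by (apply pow_incr; lra).
        assert (1 <= zf w x ^ 2) by (simpl; nra).
        assert (0 <= w x ^ 2) by (apply pow_le; nra).
        replace (c0 ^ 2 * x ^ 3) with (x * (c0 * x) ^ 2 * 1) by ring.
        apply Rmult_le_compat; try nra. }
      assert (0 < c0 ^ 2 * x ^ 3) by (apply Rmult_lt_0_compat; apply pow_lt; lra).
      assert (Hinv : / (x * w x ^ 2 * zf w x ^ 2) <= / (c0 ^ 2 * x ^ 3)) by (apply Rinv_le_contravar; lra).
      rewrite (Rinv_mult (c0 ^ 2)) in Hinv. rewrite (Rinv_mult (x * w x ^ 2)) in Hinv |- *. lra. }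
  unfold H in H0. rewrite II_1 in H0.
  assert (0 < K / 1 ^ 2) by (rewrite pow1; lra). lra.
Qed.

Lemma II_limit w : is_profile w -> exists L K M, 0 <= K /\ 1 <= M /\
  (forall r, 0 < r -> II w r <= L) /\
  (forall r, M <= r -> L <= II w r + K * exp (- (2 * sqrt 2 * r))).
Proof.
  intros Hw. destruct (II_tail w Hw) as [K [M [HK [HM Ht]]]].
  set (u := fun n => II w (INR n + 1)).
  assert (Hpos : forall n, 0 < INR n + 1) by (intros n; pose proof (pos_INR n); lra).
  assert (Hinc : forall n, u n <= u (S n)).
  { intros n. unfold u. apply II_mono; auto. rewrite S_INR. specialize (Hpos n). lra. }
  assert (Hbound : forall r, M <= r -> forall n, u n <= II w r + K * exp (- (2 * sqrt 2 * r))).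
  { intros r Hr n. unfold u. destruct (Rle_lt_dec r (INR n + 1)) as [Hl|Hl].
    - apply Ht. lra.
    - assert (II w (INR n + 1) <= II w r) by (apply II_mono; auto; specialize (Hpos n); lra).
      pose proof (exp_pos (- (2 * sqrt 2 * r))). nra. }
  destruct (ex_finite_lim_seq_incr u _ Hinc (Hbound M (Rle_refl M))) as [L HL].
  exists L, K, M. split; auto. split; auto. split.
  - intros r Hr. destruct (INR_unbounded r) as [n Hn].
    apply Rle_trans with (u n).
    + unfold u. apply II_mono; auto. lra.
    + apply (is_lim_seq_incr_compare u L HL Hinc n).
  - intros r Hr.
    assert (H := is_lim_seq_le u (fun _ => II w r + K * exp (- (2 * sqrt 2 * r))) L _ (Hbound r Hr) HL (is_lim_seq_const _)).
    simpl in H. auto.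
Qed.

Lemma zf_d1 w : is_profile w -> forall r, 0 < r -> ex_derive (zf w) r.
Proof. intros Hw r Hr. eexists. apply zf_is_derive; auto. Qed.
Lemma zf_d2 w : is_profile w -> forall r, 0 < r -> ex_derive (Derive (zf w)) r.
Proof. intros Hw r Hr. eexists. apply zf_DDerive; auto. Qed.

Lemma z2_D1 w L : is_profile w -> forall r, 0 < r ->
  is_derive (fun r => zf w r * (L - II w r)) r
    (Derive (zf w) r * (L - II w r) - zf w r * / (r * w r ^ 2 * zf w r ^ 2)).
Proof.
  intros Hw r Hr.
  assert (H1 := zf_d1 w Hw r Hr). assert (H2 := II_deriv w Hw r Hr).
  auto_derive.
  - split; auto. split; auto. eexists; eauto.
  - change (fun x => zf w x) with (zf w). change (fun x => II w x) with (II w).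
    rewrite (is_derive_unique _ _ _ H2). unfold gI. ring.
Qed.

Lemma z2_solves w L : is_profile w -> solves_z_ode w (fun r => zf w r * (L - II w r)).
Proof.
  intros Hw.
  assert (HD : forall r, 0 < r -> Derive (fun r => zf w r * (L - II w r)) r =
     Derive (zf w) r * (L - II w r) - zf w r * / (r * w r ^ 2 * zf w r ^ 2)).
  { intros r Hr. apply is_derive_unique. apply z2_D1; auto. }
  assert (HDD : forall r, 0 < r -> is_derive (Derive (fun r => zf w r * (L - II w r))) r
     (Derive (Derive (zf w)) r * (L - II w r) - Derive (zf w) r * gI w r
      - (Derive (zf w) r * / (r * w r ^ 2 * zf w r ^ 2)
         - zf w r * / (r * w r ^ 2 * zf w r ^ 2) ^ 2 *
           (w r ^ 2 * zf w r ^ 2 + r * (2 * w r * Derive w r) * zf w r ^ 2 + r * w r ^ 2 * (2 * zf w r * Derive (zf w) r))))).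
  { intros r Hr.
    pose proof (w_pos w Hw r Hr). pose proof (zf_pos w Hw r Hr).
    apply (is_derive_ext_loc (fun r => Derive (zf w) r * (L - II w r) - zf w r * / (r * w r ^ 2 * zf w r ^ 2))).
    { apply (locally_interval _ r 0 p_infty); simpl; auto.
      intros y Hy _. rewrite HD; auto. }
    assert (H1 := zf_d1 w Hw r Hr). assert (H2 := II_deriv w Hw r Hr).
    assert (H3 := zf_d2 w Hw r Hr). assert (H4 := w_d1 w Hw r Hr).
    auto_derive.
    - repeat split; auto; try (eexists; eauto).
      assert (0 < w r ^ 2 * zf w r ^ 2) by (apply Rmult_lt_0_compat; apply pow_lt; lra).
      intro Habs. simpl in *. nra.
    - change (fun x => zf w x) with (zf w). change (fun x => II w x) with (II w).
      change (fun x => w x) with w. change (fun x => Derive (zf w) x) with (Derive (zf w)).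
      rewrite (is_derive_unique _ _ _ H2).
      unfold gI. field.
      assert (0 < w r ^ 2 * zf w r ^ 2) by (apply Rmult_lt_0_compat; apply pow_lt; lra).
      repeat split; try lra. }
  split.
  - intros r Hr. split.
    + eexists. apply z2_D1; auto.
    + eexists. apply HDD; auto.
  - intros r Hr.
    pose proof (w_pos w Hw r Hr). pose proof (zf_pos w Hw r Hr).
    rewrite (is_derive_unique _ _ _ (HDD r Hr)), HD by auto.
    destruct (zf_solves w Hw) as [_ Ho]. specialize (Ho r Hr).
    replace (Derive (Derive (zf w)) r) with (- ((2 * Derive w r / w r + / r) * Derive (zf w) r) + 2 * w r ^ 2 * zf w r) by lra.
    unfold gI. field. repeat split; lra.
Qed.

Lemma zf_upper w : is_profile w -> exists C M, 0 <= C /\ 1 <= M /\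
  forall r, M < r -> zf w r <= C * (/ sqrt r * exp (sqrt 2 * r)).
Proof.
  intros Hw.
  destruct (Y_upper w (zf w) Hw (zf_solves w Hw) (zf_pos w Hw) (zf_Dpos w Hw)) as [C HC].
  destruct (w_large w Hw) as [M0 [HM0 HwM]].
  assert (HC0 : 0 <= C).
  { specialize (HC 1 ltac:(lra)). pose proof (Yf_pos w (zf w) Hw (zf_pos w Hw) 1 ltac:(lra)).
    pose proof (exp_pos (sqrt 2 * 1)). nra. }
  exists (2 * C), M0. split; [lra|split; [lra|]].
  intros r Hr. specialize (HC r ltac:(lra)). destruct (HwM r Hr) as [Hw2 _].
  unfold Yf in HC. pose proof (sqrt_lt_R0 r ltac:(lra)) as Hs.
  pose proof (zf_pos w Hw r ltac:(lra)).
  pose proof (exp_pos (sqrt 2 * r)).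
  assert (Hz : zf w r * (sqrt r * w r) <= C * exp (sqrt 2 * r)) by (rewrite <- HC; right; ring).
  assert (Hz2 : zf w r * sqrt r <= 2 * C * exp (sqrt 2 * r)).
  { apply Rle_trans with (2 * (zf w r * (sqrt r * w r))); [|lra].
    assert (0 < zf w r * sqrt r) by nra. nra. }
  apply Rmult_le_reg_r with (sqrt r); auto.
  replace (2 * C * (/ sqrt r * exp (sqrt 2 * r)) * sqrt r) with (2 * C * exp (sqrt 2 * r)) by (field; lra).
  lra.
Qed.

Theorem lemma2p2 (w : R -> R) (Hw : is_profile w) :
  exists z1 z2 : R -> R,
    solves_z_ode w z1 /\ solves_z_ode w z2 /\ lin_indep_pos z1 z2 /\
    bigO_at_0plus z1 (fun _ => 1) /\
    bigO_at_infty z1 (fun r => / sqrt r * exp (sqrt 2 * r)) /\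
    bigO_at_0plus z2 (fun r => / (r ^ 2)) /\
    bigO_at_infty z2 (fun r => / sqrt r * exp (- (sqrt 2 * r))).
Proof.
  destruct (II_limit w Hw) as [L [K [M [HK [HM [HL1 HL2]]]]]].
  destruct (II_near0 w Hw) as [Kn [HKn Hn]].
  destruct (zf_upper w Hw) as [C [Mu [HC [HMu Hu]]]].
  exists (zf w), (fun r => zf w r * (L - II w r)).
  split; [apply zf_solves; auto|].
  split; [apply z2_solves; auto|].
  split.
  { intros c1 c2 H.
    pose proof (H 1 ltac:(lra)) as H1. pose proof (H 2 ltac:(lra)) as H2.
    rewrite II_1 in H1.
    pose proof (zf_pos w Hw 1 ltac:(lra)). pose proof (zf_pos w Hw 2 ltac:(lra)).
    assert (E1 : c1 + c2 * L = 0).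
    { apply Rmult_eq_reg_l with (zf w 1); [|lra]. lra. }
    assert (E2 : c1 + c2 * (L - II w 2) = 0).
    { apply Rmult_eq_reg_l with (zf w 2); [|lra]. lra. }
    assert (HI : II w 1 < II w 2).
    { apply (strict_incr_deriv (II w) (gI w)); try lra.
      - intros x Hx. apply II_deriv; auto; lra.
      - intros x Hx. apply gI_pos; auto; lra. }
    rewrite II_1 in HI.
    assert (Hc2 : c2 * II w 2 = 0) by lra.
    apply Rmult_integral in Hc2. destruct Hc2 as [Hc2|Hc2]; [|lra].
    rewrite Hc2 in E1. split; lra. }
  split.
  { exists (exp 1), 1. split; [lra|]. intros r Hr.
    rewrite Rabs_R1, Rmult_1_r.
    pose proof (zf_ge1 w Hw r ltac:(lra)).
    rewrite Rabs_right by lra.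
    eapply Rle_trans; [apply (zf_le_exp w Hw); lra|].
    assert (Hr2 : r ^ 2 <= 1) by (simpl; nra).
    destruct (Rle_lt_or_eq_dec _ _ Hr2) as [Hl|Hl]; [left; apply exp_increasing; auto|rewrite Hl; lra]. }
  split.
  { exists C, Mu. intros r Hr. specialize (Hu r Hr).
    pose proof (zf_pos w Hw r ltac:(lra)).
    pose proof (sqrt_lt_R0 r ltac:(lra)). pose proof (exp_pos (sqrt 2 * r)).
    rewrite (Rabs_right (zf w r)) by lra.
    rewrite Rabs_right; auto.
    apply Rle_ge. apply Rmult_le_pos; [left; apply Rinv_0_lt_compat|]; lra. }
  split.
  { exists (exp 1 * (Rabs L + Kn)), 1. split; [lra|]. intros r Hr.
    pose proof (zf_ge1 w Hw r ltac:(lra)).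
    assert (Hz : zf w r <= exp 1).
    { eapply Rle_trans; [apply (zf_le_exp w Hw); lra|].
      assert (Hr2 : r ^ 2 <= 1) by (simpl; nra).
      destruct (Rle_lt_or_eq_dec _ _ Hr2) as [Hl|Hl]; [left; apply exp_increasing; auto|rewrite Hl; lra]. }
    specialize (HL1 r ltac:(lra)). specialize (Hn r ltac:(lra)).
    assert (Hr2 : 0 < r ^ 2) by (apply pow_lt; lra).
    assert (Hr21 : r ^ 2 <= 1) by (simpl; nra).
    assert (Hir : 1 <= / r ^ 2).
    { rewrite <- Rinv_1. apply Rinv_le_contravar; lra. }
    rewrite (Rabs_right (/ r ^ 2)) by (apply Rle_ge; left; apply Rinv_0_lt_compat; lra).
    rewrite Rabs_mult, Rabs_right, (Rabs_right (L - II w r)) by lra.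
    assert (HT : L - II w r <= (Rabs L + Kn) * / r ^ 2).
    { pose proof (Rle_abs L). pose proof (Rabs_pos L). assert (Rabs L * 1 <= Rabs L * / r ^ 2) by (apply Rmult_le_compat_l; lra). lra. }
    assert (0 <= L - II w r) by lra.
    pose proof (exp_pos 1).
    apply Rle_trans with (exp 1 * (L - II w r)).
    - apply Rmult_le_compat_r; lra.
    - rewrite Rmult_assoc. apply Rmult_le_compat_l; lra. }
  { exists (C * K), (Rmax M Mu). intros r Hr.
    assert (HrM : M <= r) by (eapply Rle_trans; [apply Rmax_l|left; apply Hr]).
    assert (HrMu : Mu < r) by (eapply Rle_lt_trans; [apply Rmax_r|apply Hr]).
    specialize (Hu r HrMu). specialize (HL2 r HrM). specialize (HL1 r ltac:(lra)).
    pose proof (zf_pos w Hw r ltac:(lra)).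
    pose proof (sqrt_lt_R0 r ltac:(lra)).
    assert (Hi : 0 < / sqrt r) by (apply Rinv_0_lt_compat; lra).
    pose proof (exp_pos (sqrt 2 * r)). pose proof (exp_pos (- (sqrt 2 * r))).
    pose proof (exp_pos (- (2 * sqrt 2 * r))).
    rewrite Rabs_mult, Rabs_right, (Rabs_right (L - II w r)) by lra.
    rewrite Rabs_right by (apply Rle_ge; apply Rmult_le_pos; lra).
    assert (HT : L - II w r <= K * exp (- (2 * sqrt 2 * r))) by lra.
    assert (Hee : exp (sqrt 2 * r) * exp (- (2 * sqrt 2 * r)) = exp (- (sqrt 2 * r))).
    { rewrite <- exp_plus. f_equal. ring. }
    apply Rle_trans with (C * (/ sqrt r * exp (sqrt 2 * r)) * (K * exp (- (2 * sqrt 2 * r)))).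
    - apply Rmult_le_compat; lra.
    - right. rewrite <- Hee. ring. }
Qed.
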